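(* Let $[t_0,t_1]$ be an admissible segment of $\mathbf r$. For $t\in(t_0,t_1]$ let $\mathbf r_0\,\mathbf r_1(t)\,\mathbf r_2(t)\,\mathbf r_3(t)$ be the associated tetrahedron of the sub-segment $[t_0,t]$. Then the edge lengths $\|\mathbf r_0\mathbf r_1(t)\|$, $\|\mathbf r_1(t)\mathbf r_2(t)\|$, $\|\mathbf r_2(t)\mathbf r_3(t)\|$ all tend to $0$ as $t\to t_0^+$ (equivalently, as the arc length of $\mathbf r|_{[t_0,t]}$ tends to $0$).
   Context: Setting: $\mathbf r(t)=(x(t),y(t),z(t))$ with $x,y,z$ rational functions with real coefficients whose denominators do not vanish on the parameter interval, properly parametrized, and not contained in a plane. Curvature $\kappa=\|\mathbf r'\times\mathbf r''\|/\|\mathbf r'\|^3$; torsion $\tau$ vanishes exactly where $\det(\mathbf r',\mathbf r'',\mathbf r''')=0$. Unit tangent $\boldsymbol\alpha=\mathbf r'/\|\mathbf r'\|$, unit binormal $\boldsymbol\gamma=\mathbf r'\times\mathbf r''/\|\mathbf r'\times\mathbf r''\|$; one-sided limits $\boldsymbol\alpha^{\pm}(s)=\lim_{t\to s^\pm}\boldsymbol\alpha(t)$, $\boldsymbol\gamma^{\pm}(s)=\lim_{t\to s^\pm}\boldsymbol\gamma(t)$; tangent lines $T^{\pm}(s)=\{\mathbf r(s)+\lambda\boldsymbol\alpha^{\pm}(s)\}$, osculating planes $O^{\pm}(s)=\{X:(X-\mathbf r(s))\cdot\boldsymbol\gamma^{\pm}(s)=0\}$. A point is singular if it corresponds to more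 than one parameter counted with multiplicity; character points are singular points, inflections ($\kappa=0$) and torsion-vanishing points ($\tau=0$). Associated tetrahedron of $[a,b]$: vertices $\mathbf r(a)$, $T^+(a)\cap L$, $T^-(b)\cap L$, $\mathbf r(b)$ where $L=O^+(a)\cap O^-(b)$. Admissible segment: $t_0<t_1$, no parameter in $(t_0,t_1]$ gives a character point, and for all $t_0\le s_1<s_2\le t_1$: (I) $\boldsymbol\alpha^+(s_1)\cdot\boldsymbol\gamma^-(s_2)\ne0$ and $\boldsymbol\alpha^-(s_2)\cdot\boldsymbol\gamma^+(s_1)\ne0$; (II) $(\boldsymbol\alpha^+(s_1)\times(\mathbf r(s_2)-\mathbf r(s_1)))\cdot\boldsymbol\alpha^-(s_2)\ne0$; (III) $(\mathbf r(s_1)-\mathbf r(s_2))\cdot\boldsymbol\gamma^-(s_2)\ne0$ and $(\mathbf r(s_2)-\mathbf r(s_1))\cdot\boldsymbol\gamma^+(s_1)\ne0$; and (IV) for all $t_0\le s_1<s_2<s_3\le t_1$, $\det(\boldsymbol\alpha(s_1),\boldsymbol\alpha(s_2),\boldsymbol\alpha(s_3))\ne0$ (one-sided limits used at $t_0,t_1$). *)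

(* Defs.v *)
From Stdlib Require Import Reals List ClassicalEpsilon.
Open Scope R_scope.

Definition V3 := (R * R * R)%type.
Definition vx (v : V3) : R := fst (fst v).
Definition vy (v : V3) : R := snd (fst v).
Definition vz (v : V3) : R := snd v.
Definition vzero : V3 := (0, 0, 0).
Definition vadd (u v : V3) : V3 := (vx u + vx v, vy u + vy v, vz u + vz v).
Definition vsub (u v : V3) : V3 := (vx u - vx v, vy u - vy v, vz u - vz v).
Definition vscale (a : R) (v : V3) : V3 := (a * vx v, a * vy v, a * vz v).
Definition dot (u v : V3) : R := vx u * vx v + vy u * vy v + vz u * vz v.
Definition cross (u v : V3) : V3 :=
  (vy u * vz v - vz u * vy v, vz u * vx v - vx u * vz v, vx u * vy v - vy u * vx v).
Definition vnorm (v : V3) : R := sqrt (dot v v).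
Definition det3 (a b c : V3) : R := dot a (cross b c).
Definition vdist (P Q : V3) : R := vnorm (vsub P Q).

(** * Real polynomials (coefficient lists, constant term first) *)
Fixpoint peval (p : list R) (x : R) : R :=
  match p with nil => 0 | a :: q => a + x * peval q x end.
Fixpoint padd (p q : list R) : list R :=
  match p, q with
  | nil, _ => q
  | _, nil => p
  | a :: p', b :: q' => (a + b) :: padd p' q'
  end.
Fixpoint pmul (p q : list R) : list R :=
  match p with nil => nil | a :: p' => padd (map (Rmult a) q) (0 :: pmul p' q) end.
Definition popp (p : list R) : list R := map Ropp p.
Fixpoint pderiv_aux (n : nat) (p : list R) : list R :=
  match p with nil => nil | a :: q => (INR n * a) :: pderiv_aux (S n) q end.
Definition pderiv (p : list R) : list R :=
  match p with nil => nil | _ :: q => pderiv_aux 1 q end.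

Record ratfun := { num : list R ; den : list R }.
Definition reval (f : ratfun) (t : R) : R := peval (num f) t / peval (den f) t.
(** derivative of a rational function (quotient rule) *)
Definition rderiv (f : ratfun) : ratfun :=
  {| num := padd (pmul (pderiv (num f)) (den f)) (popp (pmul (num f) (pderiv (den f))));
     den := pmul (den f) (den f) |}.

Record rcurve := { cx : ratfun ; cy : ratfun ; cz : ratfun }.
Definition cderiv (c : rcurve) : rcurve :=
  {| cx := rderiv (cx c); cy := rderiv (cy c); cz := rderiv (cz c) |}.
Definition pt (c : rcurve) (t : R) : V3 := (reval (cx c) t, reval (cy c) t, reval (cz c) t).
Definition d1 (c : rcurve) (t : R) : V3 := pt (cderiv c) t.
Definition d2 (c : rcurve) (t : R) : V3 := pt (cderiv (cderiv c)) t.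
Definition d3 (c : rcurve) (t : R) : V3 := pt (cderiv (cderiv (cderiv c))) t.

Definition is_interval (I : R -> Prop) : Prop :=
  forall x y z, I x -> I z -> x <= y <= z -> I y.
Definition denoms_nonzero (c : rcurve) (I : R -> Prop) : Prop :=
  forall t, I t -> peval (den (cx c)) t <> 0 /\ peval (den (cy c)) t <> 0
                   /\ peval (den (cz c)) t <> 0.
Definition proper_param (c : rcurve) (I : R -> Prop) : Prop :=
  exists E : list R, forall s t, I s -> I t -> ~ In s E -> ~ In t E ->
    pt c s = pt c t -> s = t.
Definition contained_in_plane (c : rcurve) (I : R -> Prop) : Prop :=
  exists (n : V3) (d : R), n <> vzero /\ forall t, I t -> dot n (pt c t) = d.

Definition curvature (c : rcurve) (t : R) : R :=
  vnorm (cross (d1 c t) (d2 c t)) / (vnorm (d1 c t)) ^ 3.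
Definition alpha (c : rcurve) (t : R) : V3 := vscale (/ vnorm (d1 c t)) (d1 c t).
Definition gamma (c : rcurve) (t : R) : V3 :=
  vscale (/ vnorm (cross (d1 c t) (d2 c t))) (cross (d1 c t) (d2 c t)).

Definition rlim (f : R -> V3) (s : R) (L : V3) : Prop :=
  forall eps, 0 < eps -> exists delta, 0 < delta /\
    forall t, s < t < s + delta -> vnorm (vsub (f t) L) < eps.
Definition llim (f : R -> V3) (s : R) (L : V3) : Prop :=
  forall eps, 0 < eps -> exists delta, 0 < delta /\
    forall t, s - delta < t < s -> vnorm (vsub (f t) L) < eps.
Definition inhV3 : inhabited V3 := inhabits vzero.
Definition alpha_p (c : rcurve) (s : R) : V3 := epsilon inhV3 (rlim (alpha c) s).
Definition alpha_m (c : rcurve) (s : R) : V3 := epsilon inhV3 (llim (alpha c) s).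
Definition gamma_p (c : rcurve) (s : R) : V3 := epsilon inhV3 (rlim (gamma c) s).
Definition gamma_m (c : rcurve) (s : R) : V3 := epsilon inhV3 (llim (gamma c) s).

Definition on_line (P u X : V3) : Prop := exists lambda, X = vadd P (vscale lambda u).
Definition on_plane (P n X : V3) : Prop := dot (vsub X P) n = 0.

(** * Associated tetrahedron of [a,b]: r(a), T+(a) ∩ L, T-(b) ∩ L, r(b),
      with L = O+(a) ∩ O-(b) *)
Definition in_L (c : rcurve) (a b : R) (X : V3) : Prop :=
  on_plane (pt c a) (gamma_p c a) X /\ on_plane (pt c b) (gamma_m c b) X.
Definition tet_v0 (c : rcurve) (a b : R) : V3 := pt c a.
Definition tet_v1 (c : rcurve) (a b : R) : V3 :=
  epsilon inhV3 (fun X => on_line (pt c a) (alpha_p c a) X /\ in_L c a b X).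
Definition tet_v2 (c : rcurve) (a b : R) : V3 :=
  epsilon inhV3 (fun X => on_line (pt c b) (alpha_m c b) X /\ in_L c a b X).
Definition tet_v3 (c : rcurve) (a b : R) : V3 := pt c b.

(** singular: r(t) corresponds to more than one parameter (with multiplicity) *)
Definition singular_param (c : rcurve) (I : R -> Prop) (t : R) : Prop :=
  (exists s, I s /\ s <> t /\ pt c s = pt c t) \/ d1 c t = vzero.
Definition inflection (c : rcurve) (t : R) : Prop := curvature c t = 0.
Definition torsion_zero (c : rcurve) (t : R) : Prop := det3 (d1 c t) (d2 c t) (d3 c t) = 0.
Definition character_point (c : rcurve) (I : R -> Prop) (t : R) : Prop :=
  singular_param c I t \/ inflection c t \/ torsion_zero c t.

Definition alpha_seg (c : rcurve) (t0 t1 s : R) : V3 :=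
  if Req_EM_T s t0 then alpha_p c t0
  else if Req_EM_T s t1 then alpha_m c t1 else alpha c s.

Definition admissible (c : rcurve) (I : R -> Prop) (t0 t1 : R) : Prop :=
  t0 < t1 /\
  (forall t, t0 < t <= t1 -> ~ character_point c I t) /\
  (forall s1 s2, t0 <= s1 -> s1 < s2 -> s2 <= t1 ->
     (dot (alpha_p c s1) (gamma_m c s2) <> 0 /\ dot (alpha_m c s2) (gamma_p c s1) <> 0) /\
     dot (cross (alpha_p c s1) (vsub (pt c s2) (pt c s1))) (alpha_m c s2) <> 0 /\
     (dot (vsub (pt c s1) (pt c s2)) (gamma_m c s2) <> 0 /\
      dot (vsub (pt c s2) (pt c s1)) (gamma_p c s1) <> 0)) /\
  (forall s1 s2 s3, t0 <= s1 -> s1 < s2 -> s2 < s3 -> s3 <= t1 ->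
     det3 (alpha_seg c t0 t1 s1) (alpha_seg c t0 t1 s2) (alpha_seg c t0 t1 s3) <> 0).

(* Main.v *)
Require Import Defs.
From Stdlib Require Import Reals List ClassicalEpsilon.
From Stdlib Require Import Lra Lia Classical Factorial FunctionalExtensionality PropExtensionality.
Open Scope R_scope.

Lemma peval_padd p q x : peval (padd p q) x = peval p x + peval q x.
Proof.
  revert q; induction p as [|a p IH]; intros [|b q]; simpl; try ring.
  rewrite IH; ring.
Qed.

Lemma peval_map_mult a q x : peval (map (Rmult a) q) x = a * peval q x.
Proof. induction q as [|b q IH]; simpl; [ring| rewrite IH; ring]. Qed.

Lemma peval_pmul p q x : peval (pmul p q) x = peval p x * peval q x.
Proof.
  induction p as [|a p IH]; simpl; [ring|].
  rewrite peval_padd, peval_map_mult; simpl; rewrite IH; ring.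
Qed.

Lemma peval_popp p x : peval (popp p) x = - peval p x.
Proof. unfold popp; induction p as [|a p IH]; simpl; [ring| rewrite IH; ring]. Qed.

Lemma peval_pderiv_aux_S n q x :
  peval (pderiv_aux (S n) q) x = peval (pderiv_aux n q) x + peval q x.
Proof.
  revert n; induction q as [|b q IH]; intros n; cbn [pderiv_aux peval]; [ring|].
  rewrite IH. rewrite (S_INR n). ring.
Qed.

Lemma peval_pderiv_aux_0 q x : peval (pderiv_aux 0 q) x = x * peval (pderiv q) x.
Proof. destruct q; simpl; ring. Qed.

Lemma dpl_eq f x l1 l2 : derivable_pt_lim f x l1 -> l1 = l2 -> derivable_pt_lim f x l2.
Proof. intros H ->; exact H. Qed.

Lemma dpl_ext f g x l : (forall y, f y = g y) -> derivable_pt_lim f x l -> derivable_pt_lim g x l.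
Proof.
  intros E H eps Heps. destruct (H eps Heps) as [d Hd]. exists d. intros h Hh Hd'.
  rewrite <- !E. apply Hd; auto.
Qed.

Lemma peval_deriv p x : derivable_pt_lim (peval p) x (peval (pderiv p) x).
Proof.
  induction p as [|a q IH].
  - simpl. apply (dpl_ext (fun _ => 0)); [reflexivity|]. apply derivable_pt_lim_const.
  - apply (dpl_ext (fun y => a + y * peval q y)); [reflexivity|].
    apply dpl_eq with (0 + (1 * peval q x + x * peval (pderiv q) x)).
    + apply (derivable_pt_lim_plus (fun _ => a) (fun y => y * peval q y)).
      apply derivable_pt_lim_const.
      apply (derivable_pt_lim_mult (fun y => y) (peval q)).
      apply derivable_pt_lim_id. exact IH.
    + simpl. rewrite peval_pderiv_aux_S, peval_pderiv_aux_0. ring.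
Qed.

Lemma pderiv_aux_length n q : length (pderiv_aux n q) = length q.
Proof. revert n; induction q; intros; simpl; auto. Qed.

Lemma pderiv_length p : length (pderiv p) = pred (length p).
Proof. destruct p; simpl; auto. apply pderiv_aux_length. Qed.

Lemma den_rderiv_nz f t : peval (den f) t <> 0 -> peval (den (rderiv f)) t <> 0.
Proof. intros H. simpl. rewrite peval_pmul. apply Rmult_integral_contrapositive; auto. Qed.

Lemma reval_deriv f t : peval (den f) t <> 0 ->
  derivable_pt_lim (reval f) t (reval (rderiv f) t).
Proof.
  intros H. apply (dpl_ext (fun y => peval (Defs.num f) y / peval (den f) y)); [reflexivity|].
  eapply dpl_eq.
  - apply (derivable_pt_lim_div (peval (Defs.num f)) (peval (den f))); auto; apply peval_deriv.
  - unfold reval; simpl. rewrite peval_padd, peval_popp, !peval_pmul.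
    unfold Rsqr. field. auto.
Qed.

Fixpoint riter (k : nat) (f : ratfun) : ratfun :=
  match k with O => f | S k => rderiv (riter k f) end.

Lemma riter_den_nz k f t : peval (den f) t <> 0 -> peval (den (riter k f)) t <> 0.
Proof. intros H; induction k; simpl; auto. apply den_rderiv_nz; auto. Qed.

Definition chain (F : nat -> R -> R) (lo hi : R) :=
  forall k t, lo <= t <= hi -> derivable_pt_lim (F k) t (F (S k) t).

Definition Rc (f : ratfun) (k : nat) (t : R) : R := reval (riter k f) t.

Lemma Rc_chain f lo hi : (forall t, lo <= t <= hi -> peval (den f) t <> 0) -> chain (Rc f) lo hi.
Proof.
  intros H k t Ht. unfold Rc. simpl. apply reval_deriv. apply riter_den_nz; auto.
Qed.

Definition sub0 (F : nat -> R -> R) (C : R) (k : nat) (t : R) : R :=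
  match k with O => F O t - C | S k' => F (S k') t end.

Lemma sub0_chain F C lo hi : chain F lo hi -> chain (sub0 F C) lo hi.
Proof.
  intros H [|k] t Ht; simpl.
  - apply (dpl_ext (fun y => F O y - C)); [reflexivity|].
    eapply dpl_eq. apply (derivable_pt_lim_minus (F O) (fun _ => C)).
    apply H; auto. apply derivable_pt_lim_const. ring.
  - apply H; auto.
Qed.

Definition lin3 (a1 a2 a3 : R) (F1 F2 F3 : nat -> R -> R) (k : nat) (t : R) : R :=
  a1 * F1 k t + a2 * F2 k t + a3 * F3 k t.

Lemma lin3_chain a1 a2 a3 F1 F2 F3 lo hi : chain F1 lo hi -> chain F2 lo hi -> chain F3 lo hi ->
  chain (lin3 a1 a2 a3 F1 F2 F3) lo hi.
Proof.
  intros H1 H2 H3 k t Ht. unfold lin3.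
  apply (dpl_ext (fun y => (a1 * F1 k y + a2 * F2 k y) + a3 * F3 k y)); [reflexivity|].
  apply derivable_pt_lim_plus; [apply derivable_pt_lim_plus|];
  apply derivable_pt_lim_scal; auto.
Qed.

Lemma chain_shift F lo hi j : chain F lo hi -> chain (fun k => F (j + k)%nat) lo hi.
Proof. intros H k t Ht. replace (j + S k)%nat with (S (j + k)) by lia. apply H; auto. Qed.

Lemma chain_cont F lo hi k t : chain F lo hi -> lo <= t <= hi -> continuity_pt (F k) t.
Proof.
  intros H Ht. apply derivable_continuous_pt. exists (F (S k) t). apply H; auto.
Qed.


Definition RL (f : R -> R) (L : R) := limit1_in f (fun h => 0 < h) L 0.

Lemma RL_def f L : RL f L <-> forall eps, 0 < eps -> exists d, 0 < d /\
   forall h, 0 < h < d -> Rabs (f h - L) < eps.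
Proof.
  unfold RL, limit1_in, limit_in; simpl; unfold Rdist. split.
  - intros H eps He. destruct (H eps He) as [d [Hd H']]. exists d; split; auto.
    intros h Hh. apply H'. split. lra. rewrite Rminus_0_r, Rabs_right; lra.
  - intros H eps He. destruct (H eps He) as [d [Hd H']]. exists d; split; auto.
    intros h [Hh1 Hh2]. apply H'. rewrite Rminus_0_r, Rabs_right in Hh2; lra.
Qed.

Lemma RL_ext_loc f g L : (exists d, 0 < d /\ forall h, 0 < h < d -> f h = g h) -> RL f L -> RL g L.
Proof.
  intros [d [Hd E]] H. rewrite RL_def in *. intros eps He.
  destruct (H eps He) as [d' [Hd' H']]. exists (Rmin d d'). split.
  apply Rmin_pos; auto. intros h Hh. rewrite <- E. apply H'.
  split; [lra|]. pose proof (Rmin_r d d'); lra. pose proof (Rmin_l d d'); lra.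
Qed.

Lemma RL_ext f g L : (forall h, 0 < h -> f h = g h) -> RL f L -> RL g L.
Proof. intros E. apply RL_ext_loc. exists 1; split; [lra|]. intros h Hh; apply E; lra. Qed.

Lemma RL_cont g t0 : continuity_pt g t0 -> RL (fun h => g (t0 + h)) (g t0).
Proof.
  intros H. rewrite RL_def. intros eps He.
  destruct (H eps He) as [d [Hd H']]. exists d; split; auto. intros h Hh.
  simpl in H'; unfold Rdist in H'. apply H'. split.
  - split. exact I. lra.
  - replace (t0 + h - t0) with h by ring. rewrite Rabs_right; lra.
Qed.

Lemma RL_const c : RL (fun _ => c) c.
Proof. rewrite RL_def. intros eps He. exists 1; split; [lra|]. intros. unfold Rminus; rewrite Rplus_opp_r, Rabs_R0; lra. Qed.

Lemma RL_id : RL (fun h => h) 0.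
Proof. rewrite RL_def. intros eps He. exists eps; split; auto. intros h Hh. rewrite Rminus_0_r, Rabs_right; lra. Qed.

Lemma RL_plus f g a b : RL f a -> RL g b -> RL (fun h => f h + g h) (a + b).
Proof. apply limit_plus. Qed.
Lemma RL_minus f g a b : RL f a -> RL g b -> RL (fun h => f h - g h) (a - b).
Proof. apply limit_minus. Qed.
Lemma RL_mult f g a b : RL f a -> RL g b -> RL (fun h => f h * g h) (a * b).
Proof. apply limit_mul. Qed.
Lemma RL_opp f a : RL f a -> RL (fun h => - f h) (- a).
Proof. apply limit_Ropp. Qed.
Lemma RL_inv f a : RL f a -> a <> 0 -> RL (fun h => / f h) (/ a).
Proof. apply limit_inv. Qed.
Lemma RL_div f g a b : RL f a -> RL g b -> b <> 0 -> RL (fun h => f h / g h) (a / b).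
Proof. intros. unfold Rdiv. apply RL_mult; auto. apply RL_inv; auto. Qed.

Lemma RL_eq f a b : RL f a -> a = b -> RL f b.
Proof. intros H ->; auto. Qed.

Lemma RL_pow n : (0 < n)%nat -> RL (fun h => h ^ n) 0.
Proof.
  induction n as [|n IH]; intros Hn; [lia|].
  destruct n. apply (RL_ext (fun h => h)); [intros; simpl; ring| apply RL_id].
  eapply RL_eq. apply (RL_mult (fun h => h) (fun h => h ^ S n)); [apply RL_id| apply IH; lia]. ring.
Qed.

Lemma RL_comp_cont f g L : RL f L -> continuity_pt g L -> RL (fun h => g (f h)) (g L).
Proof.
  intros H Hg. rewrite RL_def in *. intros eps He.
  destruct (Hg eps He) as [d [Hd H']]. simpl in H'; unfold Rdist in H'.
  destruct (H d Hd) as [d2 [Hd2 H2]]. exists d2; split; auto. intros h Hh.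
  destruct (Req_dec (f h) L) as [E|E].
  - rewrite E. unfold Rminus; rewrite Rplus_opp_r, Rabs_R0; lra.
  - apply H'. split. split. exact I. auto. apply H2; auto.
Qed.

Lemma RL_unique f a b : RL f a -> RL f b -> a = b.
Proof.
  intros. eapply single_limit; eauto. intros alp Ha. exists (alp/2). split. lra.
  unfold Rdist. rewrite Rminus_0_r, Rabs_right; lra.
Qed.

Lemma RL_ev_nz f a : RL f a -> a <> 0 -> exists d, 0 < d /\ forall h, 0 < h < d -> f h <> 0.
Proof.
  intros H Ha. rewrite RL_def in H. destruct (H (Rabs a) (Rabs_pos_lt _ Ha)) as [d [Hd H']].
  exists d; split; auto. intros h Hh E. specialize (H' h Hh). rewrite E in H'.
  rewrite Rminus_0_l, Rabs_Ropp in H'. lra.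
Qed.

Lemma RL_ev_pos f a : RL f a -> 0 < a -> exists d, 0 < d /\ forall h, 0 < h < d -> 0 < f h.
Proof.
  intros H Ha. rewrite RL_def in H. destruct (H a Ha) as [d [Hd H']].
  exists d; split; auto. intros h Hh. specialize (H' h Hh).
  apply Rabs_def2 in H'. lra.
Qed.

Lemma neg_chain G lo hi : chain G lo hi -> chain (fun k t => - G k t) lo hi.
Proof.
  intros H k t Ht. apply (dpl_ext (fun y => (-1) * G k y)). intros; ring.
  eapply dpl_eq. apply (derivable_pt_lim_scal (G k) (-1)). apply H; auto. ring.
Qed.

Lemma mvt_up G t0 t1 n K h : chain G t0 t1 -> G 0%nat t0 = 0 -> 0 < h -> t0 + h <= t1 ->
  (forall s, 0 < s < h -> G 1%nat (t0 + s) < K * s ^ n) ->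
  G 0%nat (t0 + h) < K * h ^ (S n) / INR (S n).
Proof.
  intros HC H0 Hh Hh1 Hs.
  pose (phi := fun s => G 0%nat (t0 + s) - K * s ^ (S n) / INR (S n)).
  pose (phi' := fun s => G 1%nat (t0 + s) - K * s ^ n).
  assert (HS : INR (S n) <> 0) by (apply not_0_INR; lia).
  destruct (MVT_cor2 phi phi' 0 h Hh) as [c [Ec Hc]].
  - intros c Hc. unfold phi, phi'.
    apply (dpl_ext (fun s => G 0%nat (t0 + s) - (K / INR (S n)) * s ^ (S n))).
    { intros; unfold Rdiv; ring. }
    eapply dpl_eq.
    apply (derivable_pt_lim_minus (fun s => G 0%nat (t0 + s)) (fun s => (K / INR (S n)) * s ^ (S n))).
    + apply (dpl_ext (comp (G 0%nat) (fun s => t0 + s))). reflexivity.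
      eapply dpl_eq. apply derivable_pt_lim_comp.
      apply (dpl_ext (fun s => t0 + s)). reflexivity.
      eapply dpl_eq. apply (derivable_pt_lim_plus (fun _ => t0) (fun s => s)).
      apply derivable_pt_lim_const. apply derivable_pt_lim_id. reflexivity.
      apply HC. cbv beta; lra. reflexivity.
    + apply (derivable_pt_lim_scal (fun s => s ^ S n)). apply derivable_pt_lim_pow.
    + simpl pred. field. auto.
  - unfold phi, phi' in Ec. rewrite Rplus_0_r, H0 in Ec.
    assert (Hlt : G 1%nat (t0 + c) - K * c ^ n < 0) by (specialize (Hs c Hc); lra).
    assert (G 0%nat (t0 + h) - K * h ^ S n / INR (S n) < 0).
    { replace (G 0%nat (t0 + h) - K * h ^ S n / INR (S n)) with
        ((G 1%nat (t0 + c) - K * c ^ n) * (h - 0) + (0 - K * 0 ^ S n / INR (S n))) by lra.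
      simpl (0 ^ S n). rewrite Rmult_0_l, Rmult_0_r. unfold Rdiv; rewrite Rmult_0_l.
      assert (0 < h - 0) by lra. nra. }
    lra.
Qed.

Lemma core n : forall G t0 t1, chain G t0 t1 -> t0 < t1 -> (forall j, (j < n)%nat -> G j t0 = 0) ->
  RL (fun h => G 0%nat (t0 + h) / h ^ n) (G n t0 / INR (fact n)).
Proof.
  induction n as [|n IH]; intros G t0 t1 HC Ht H0.
  - apply (RL_ext (fun h => G 0%nat (t0 + h))).
    { intros; simpl; field. }
    eapply RL_eq. apply RL_cont. eapply chain_cont; eauto. lra. simpl; field.
  - pose (G' := fun k => G (S k)).
    assert (HC' : chain G' t0 t1) by (intros k t Hk; apply HC; auto).
    assert (IHn := IH G' t0 t1 HC' Ht (fun j Hj => H0 (S j) ltac:(lia))).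
    unfold G' in IHn. set (L := G (S n) t0 / INR (fact n)) in *.
    assert (HS : 0 < INR (S n)) by (apply lt_0_INR; lia).
    assert (Hf : G (S n) t0 / INR (fact (S n)) = L / INR (S n)).
    { unfold L. rewrite fact_simpl, mult_INR. field. split. apply not_0_INR. apply fact_neq_0. lra. }
    rewrite Hf. rewrite RL_def in *. intros eps He.
    destruct (IHn eps He) as [d [Hd Hd']].
    exists (Rmin d (t1 - t0)). split. apply Rmin_pos; lra.
    intros h Hh. pose proof (Rmin_l d (t1 - t0)); pose proof (Rmin_r d (t1 - t0)).
    assert (G00 : G 0%nat t0 = 0) by (apply H0; lia).
    assert (Hhp : 0 < h ^ n) by (apply pow_lt; lra).
    assert (Hhp' : 0 < h ^ S n) by (apply pow_lt; lra).
    assert (Up : G 0%nat (t0 + h) < (L + eps) * h ^ (S n) / INR (S n)).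
    { apply (mvt_up G t0 t1 n); auto; try lra. intros s Hs.
      assert (Hsp : 0 < s ^ n) by (apply pow_lt; lra).
      specialize (Hd' s ltac:(lra)). apply Rabs_def2 in Hd'. destruct Hd' as [A B].
      assert (Hq : G 1%nat (t0 + s) / s ^ n < L + eps) by lra.
      apply Rmult_lt_compat_r with (r := s ^ n) in Hq; auto.
      unfold Rdiv in Hq. rewrite Rmult_assoc, Rinv_l in Hq; lra. }
    assert (Lo : - G 0%nat (t0 + h) < (-(L - eps)) * h ^ (S n) / INR (S n)).
    { apply (mvt_up (fun k t => - G k t) t0 t1 n); auto; try lra.
      try (apply neg_chain; auto). try (cbv beta; rewrite G00; ring). intros s Hs; cbv beta.
      assert (Hsp : 0 < s ^ n) by (apply pow_lt; lra).
      specialize (Hd' s ltac:(lra)). apply Rabs_def2 in Hd'. destruct Hd' as [A B].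
      assert (Hq : L - eps < G 1%nat (t0 + s) / s ^ n) by lra.
      apply Rmult_lt_compat_r with (r := s ^ n) in Hq; auto.
      unfold Rdiv in Hq. rewrite Rmult_assoc, Rinv_l in Hq; lra. }
    set (g := G 0%nat (t0 + h)) in *.
    assert (E1 : g / h ^ S n < (L + eps) / INR (S n)).
    { apply (Rmult_lt_reg_r (h ^ S n)); auto. unfold Rdiv.
      replace (g * / h ^ S n * h ^ S n) with g by (field; lra).
      replace ((L + eps) * / INR (S n) * h ^ S n) with ((L + eps) * h ^ S n / INR (S n)) by (field; lra). lra. }
    assert (E2 : (L - eps) / INR (S n) < g / h ^ S n).
    { apply (Rmult_lt_reg_r (h ^ S n)); auto. unfold Rdiv.
      replace (g * / h ^ S n * h ^ S n) with g by (field; lra).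
      replace ((L - eps) * / INR (S n) * h ^ S n) with ((L - eps) * h ^ S n / INR (S n)) by (field; lra). lra. }
    assert (HS1 : 1 <= INR (S n)) by (rewrite S_INR; pose proof (pos_INR n); lra).
    assert (eps / INR (S n) <= eps).
    { unfold Rdiv. rewrite <- (Rmult_1_r eps) at 2. apply Rmult_le_compat_l. lra.
      rewrite <- Rinv_1. apply Rinv_le_contravar; lra. }
    apply Rabs_def1.
    + replace ((L + eps) / INR (S n)) with (L / INR (S n) + eps / INR (S n)) in E1 by (field; lra). lra.
    + replace ((L - eps) / INR (S n)) with (L / INR (S n) - eps / INR (S n)) in E2 by (field; lra). lra.
Qed.

Definition qc (m k : nat) : R := if Nat.leb k m then / INR (fact (m - k)) else 0.

Lemma scalar_asym F t0 t1 m k : chain F t0 t1 -> t0 < t1 -> (forall j, (j < m)%nat -> F j t0 = 0) ->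
  RL (fun h => F k (t0 + h) * h ^ k / h ^ m) (F m t0 * qc m k).
Proof.
  intros HC Ht H0. unfold qc. destruct (Nat.leb_spec k m) as [Hkm|Hkm].
  - pose proof (core (m - k) (fun j => F (k + j)%nat) t0 t1 (chain_shift F t0 t1 k HC) Ht
      (fun j Hj => H0 (k + j)%nat ltac:(lia))) as H.
    simpl in H. rewrite Nat.add_0_r in H. replace (k + (m - k))%nat with m in H by lia.
    eapply RL_eq. eapply RL_ext; [|exact H].
    + intros h Hh. assert (E : h ^ m = h ^ (m - k) * h ^ k) by (rewrite <- pow_add; f_equal; lia).
      rewrite E.
      field. split; apply pow_nonzero; lra.
    + unfold Rdiv; ring.
  - apply (RL_ext (fun h => F k (t0 + h) * h ^ (k - m))).
    + intros h Hh. assert (E : h ^ k = h ^ (k - m) * h ^ m) by (rewrite <- pow_add; f_equal; lia).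
      rewrite E.
      field. apply pow_nonzero; lra.
    + eapply RL_eq. apply RL_mult. apply RL_cont. eapply chain_cont; eauto. lra.
      apply RL_pow. lia. ring.
Qed.


Ltac vd := repeat match goal with v : V3 |- _ => destruct v as [[? ?] ?] end;
  unfold det3, dot, cross, vsub, vadd, vscale, vx, vy, vz, vzero in *; cbn [fst snd] in *.

Lemma V3_ext (u v : V3) : vx u = vx v -> vy u = vy v -> vz u = vz v -> u = v.
Proof. destruct u as [[a b] c], v as [[d e] f]; unfold vx, vy, vz; simpl; intros -> -> ->; auto. Qed.

Fixpoint piter (k : nat) (p : list R) : list R :=
  match k with O => p | S k => pderiv (piter k p) end.

Lemma piter_comm k p : piter k (pderiv p) = piter (S k) p.
Proof. induction k; simpl; auto. rewrite IHk; auto. Qed.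

Definition PC (p : list R) (k : nat) (t : R) := peval (piter k p) t.

Lemma PC_chain p lo hi : chain (PC p) lo hi.
Proof. intros k t _. unfold PC; simpl. apply peval_deriv. Qed.

Lemma deriv_zero_const f f' a b : a <= b -> (forall c, a <= c <= b -> derivable_pt_lim f c (f' c)) ->
  (forall c, a <= c <= b -> f' c = 0) -> f b = f a.
Proof.
  intros Hab Hd Hz. destruct (Rle_lt_or_eq_dec _ _ Hab) as [H|H]; [|subst; auto].
  destruct (MVT_cor2 f f' a b H Hd) as [c [E Hc]]. rewrite Hz in E; lra.
Qed.

Lemma poly_flat_zero t0 n : forall p, (length p <= n)%nat -> (forall k, peval (piter k p) t0 = 0) ->
  forall t, peval p t = 0.
Proof.
  induction n as [|n IH]; intros p Hl H t.
  - destruct p; simpl in *; [auto|lia].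
  - assert (Hq : forall t, peval (pderiv p) t = 0).
    { apply IH. rewrite pderiv_length; lia. intros k. rewrite piter_comm. apply H. }
    assert (H0 : peval p t0 = 0) by apply (H O).
    destruct (Rle_dec t0 t).
    + rewrite (deriv_zero_const (peval p) (peval (pderiv p)) t0 t); auto.
      intros; apply peval_deriv.
    + rewrite <- (deriv_zero_const (peval p) (peval (pderiv p)) t t0); auto; try lra.
      intros; apply peval_deriv.
Qed.

Lemma poly_zero_of_small p t0 : (forall m, RL (fun h => peval p (t0 + h) / h ^ m) 0) ->
  forall t, peval p t = 0.
Proof.
  intros H. apply (poly_flat_zero t0 (length p)); auto.
  intros k. induction k as [k IHk] using (well_founded_induction Wf_nat.lt_wf).
  pose proof (core k (PC p) t0 (t0 + 1) (PC_chain p _ _) ltac:(lra) IHk) as Hc.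
  unfold PC in Hc; simpl in Hc.
  pose proof (RL_unique _ _ _ Hc (H k)) as E.
  assert (INR (fact k) <> 0) by (apply not_0_INR, fact_neq_0).
  unfold Rdiv in E. apply Rmult_integral in E. destruct E as [E|E]; auto.
  exfalso. apply Rinv_neq_0_compat in H0. auto.
Qed.

Definition Ux c t0 := sub0 (Rc (cx c)) (reval (cx c) t0).
Definition Uy c t0 := sub0 (Rc (cy c)) (reval (cy c) t0).
Definition Uz c t0 := sub0 (Rc (cz c)) (reval (cz c) t0).
Definition U c t0 (k : nat) (t : R) : V3 := (Ux c t0 k t, Uy c t0 k t, Uz c t0 k t).

Lemma U0 c t0 t : U c t0 0 t = vsub (pt c t) (pt c t0). Proof. reflexivity. Qed.
Lemma U1 c t0 t : U c t0 1 t = Defs.d1 c t. Proof. reflexivity. Qed.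
Lemma U2 c t0 t : U c t0 2 t = Defs.d2 c t. Proof. reflexivity. Qed.
Lemma U3 c t0 t : U c t0 3 t = Defs.d3 c t. Proof. reflexivity. Qed.
Lemma U0t0 c t0 : U c t0 0 t0 = vzero.
Proof. unfold U, Ux, Uy, Uz, sub0, Rc; simpl. unfold vzero. f_equal; [f_equal|]; ring. Qed.

Definition dens_ok (c : rcurve) (t0 t1 : R) := forall t, t0 <= t <= t1 ->
  peval (den (cx c)) t <> 0 /\ peval (den (cy c)) t <> 0 /\ peval (den (cz c)) t <> 0.

Lemma Ux_chain c t0 t1 : dens_ok c t0 t1 -> chain (Ux c t0) t0 t1.
Proof. intros H. apply sub0_chain, Rc_chain. intros; apply H; auto. Qed.
Lemma Uy_chain c t0 t1 : dens_ok c t0 t1 -> chain (Uy c t0) t0 t1.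
Proof. intros H. apply sub0_chain, Rc_chain. intros; apply H; auto. Qed.
Lemma Uz_chain c t0 t1 : dens_ok c t0 t1 -> chain (Uz c t0) t0 t1.
Proof. intros H. apply sub0_chain, Rc_chain. intros; apply H; auto. Qed.

Definition Gn c t0 (n : V3) (k : nat) (t : R) : R := dot (U c t0 k t) n.

Lemma Gn_chain c t0 t1 n : dens_ok c t0 t1 -> chain (Gn c t0 n) t0 t1.
Proof.
  intros H. assert (E : Gn c t0 n = lin3 (vx n) (vy n) (vz n) (Ux c t0) (Uy c t0) (Uz c t0)).
  { unfold Gn, lin3, U, dot; simpl. apply functional_extensionality; intros k;
    apply functional_extensionality; intros t. unfold vx, vy, vz; simpl. ring. }
  rewrite E. apply lin3_chain; [apply Ux_chain|apply Uy_chain|apply Uz_chain]; auto.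
Qed.

Lemma dpl_ext_loc f g x l d : 0 < d -> (forall y, Rabs (y - x) < d -> f y = g y) ->
  derivable_pt_lim f x l -> derivable_pt_lim g x l.
Proof.
  intros Hd E H eps He. destruct (H eps He) as [d' Hd']. 
  assert (Hm : 0 < Rmin d d') by (apply Rmin_pos; auto; apply (cond_pos d')).
  exists (mkposreal _ Hm). simpl. intros h Hh0 Hh.
  pose proof (Rmin_l d d'); pose proof (Rmin_r d d').
  rewrite <- !E. apply Hd'; auto. lra. rewrite Rminus_diag_eq, Rabs_R0; auto.
  replace (x + h - x) with h by ring. lra.
Qed.

Lemma deriv_loc_zero f x l a b : a < x < b -> (forall y, a < y < b -> f y = 0) ->
  derivable_pt_lim f x l -> l = 0.
Proof.
  intros Hx Hz H. assert (Hd : 0 < Rmin (x - a) (b - x)) by (apply Rmin_pos; lra).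
  apply (uniqueness_limite f x l 0); auto.
  apply (dpl_ext_loc (fun _ => 0) f x 0 _ Hd).
  - intros y Hy. pose proof (Rmin_l (x - a) (b - x)); pose proof (Rmin_r (x - a) (b - x)).
    apply Rabs_def2 in Hy. rewrite Hz; auto; lra.
  - apply derivable_pt_lim_const.
Qed.

Lemma peval_cont p t : continuity_pt (peval p) t.
Proof. apply derivable_continuous_pt. exists (peval (pderiv p) t). apply peval_deriv. Qed.

Lemma det_n_id a b e n : det3 a b e * dot n n = dot a n * dot n (cross b e) + dot b n * dot n (cross e a)
     + dot e n * dot n (cross a b).
Proof. vd; ring. Qed.

Lemma no_flat c t0 t1 n : t0 < t1 -> dens_ok c t0 t1 ->
  (forall t, t0 < t < t1 -> det3 (Defs.d1 c t) (Defs.d2 c t) (Defs.d3 c t) <> 0) -> n <> vzero ->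
  ~ (forall k, Gn c t0 n k t0 = 0).
Proof.
  intros Ht Hd Htor Hn Hflat.
  set (G := Gn c t0 n). assert (HC : chain G t0 t1) by (apply Gn_chain; auto).
  set (p1 := Defs.num (cx c)); set (q1 := den (cx c));
  set (p2 := Defs.num (cy c)); set (q2 := den (cy c));
  set (p3 := Defs.num (cz c)); set (q3 := den (cz c)).
  set (K := vx n * reval (cx c) t0 + vy n * reval (cy c) t0 + vz n * reval (cz c) t0).
  set (P := padd (padd (padd (map (Rmult (vx n)) (pmul p1 (pmul q2 q3)))
                               (map (Rmult (vy n)) (pmul p2 (pmul q1 q3))))
                         (map (Rmult (vz n)) (pmul p3 (pmul q1 q2))))
                   (map (Rmult (- K)) (pmul q1 (pmul q2 q3)))).
  set (Q := pmul q1 (pmul q2 q3)).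
  assert (HPQ : forall t, t0 <= t <= t1 -> peval P t = G 0%nat t * peval Q t).
  { intros t Ht'. destruct (Hd t Ht') as [H1 [H2 H3]].
    unfold P, Q, G, Gn. rewrite U0. unfold pt.
    rewrite !peval_padd, !peval_map_mult, !peval_pmul.
    unfold K, reval, p1, p2, p3, q1, q2, q3 in *. destruct (Hd t0 ltac:(lra)) as [H1' [H2' H3']]. vd. field. tauto. }
  assert (HP : forall t, peval P t = 0).
  { apply (poly_zero_of_small P t0). intros m.
    apply (RL_ext_loc (fun h => (G 0%nat (t0 + h) / h ^ m) * peval Q (t0 + h))).
    - exists (t1 - t0); split; [lra|]. intros h Hh. rewrite HPQ; [|lra]. field.
      apply pow_nonzero; lra.
    - eapply RL_eq. apply RL_mult.
      + pose proof (core m G t0 t1 HC Ht (fun j _ => Hflat j)) as Hc.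
        assert (Hm : G m t0 = 0) by apply Hflat. rewrite Hm in Hc. exact Hc.
      + apply RL_cont. apply peval_cont.
      + unfold Rdiv; ring. }
  assert (HG0 : forall t, t0 <= t <= t1 -> G 0%nat t = 0).
  { intros t Ht'. destruct (Hd t Ht') as [H1 [H2 H3]].
    assert (peval Q t <> 0).
    { unfold Q. rewrite !peval_pmul. repeat apply Rmult_integral_contrapositive; auto. }
    pose proof (HPQ t Ht'). rewrite HP in H0. 
    symmetry in H0. apply Rmult_integral in H0. destruct H0; auto. contradiction. }
  assert (HGS : forall k, forall t, t0 < t < t1 -> G k t = 0).
  { induction k as [|k IH]; intros t Ht'.
    - apply HG0; lra.
    - apply (deriv_loc_zero (G k) t (G (S k) t) t0 t1); auto. apply HC; lra. }
  set (t := (t0 + t1) / 2).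
  assert (Htt : t0 < t < t1) by (unfold t; lra).
  apply (Htor t Htt).
  pose proof (HGS 1%nat t Htt) as A. pose proof (HGS 2%nat t Htt) as B. pose proof (HGS 3%nat t Htt) as C.
  unfold G, Gn in A, B, C. rewrite U1 in A. rewrite U2 in B. rewrite U3 in C.
  assert (Hnn : 0 < dot n n).
  { destruct n as [[x y] z]. unfold dot, vx, vy, vz; simpl.
    destruct (Req_dec x 0), (Req_dec y 0), (Req_dec z 0); subst;
      try (apply Rlt_le_trans with (x*x); [apply Rsqr_pos_lt; auto|nra]);
      try (apply Rlt_le_trans with (y*y); [apply Rsqr_pos_lt; auto|nra]);
      try (apply Rlt_le_trans with (z*z); [apply Rsqr_pos_lt; auto|nra]).
    exfalso; apply Hn; reflexivity. }
  set (a := Defs.d1 c t) in *; set (b := Defs.d2 c t) in *; set (e := Defs.d3 c t) in *.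
  pose proof (det_n_id a b e n) as Id.
  rewrite A, B, C in Id. apply (Rmult_eq_reg_r (dot n n)). rewrite Id; ring. lra.
Qed.


Definition N1 (v : V3) := Rabs (vx v) + Rabs (vy v) + Rabs (vz v).

Lemma dot_pos v : v <> vzero -> 0 < dot v v.
Proof.
  intros Hn. destruct v as [[x y] z]. unfold dot, vx, vy, vz; simpl.
  destruct (Req_dec x 0), (Req_dec y 0), (Req_dec z 0); subst;
    try (apply Rlt_le_trans with (x*x); [apply Rsqr_pos_lt; auto|nra]);
    try (apply Rlt_le_trans with (y*y); [apply Rsqr_pos_lt; auto|nra]);
    try (apply Rlt_le_trans with (z*z); [apply Rsqr_pos_lt; auto|nra]).
  exfalso; apply Hn; reflexivity.
Qed.

Lemma vnorm_pos v : v <> vzero -> 0 < vnorm v.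
Proof. intros H. unfold vnorm. apply sqrt_lt_R0. apply dot_pos; auto. Qed.

Lemma vnorm_le_N1 v : vnorm v <= N1 v.
Proof.
  unfold vnorm, N1. rewrite <- (sqrt_Rsqr (Rabs (vx v) + Rabs (vy v) + Rabs (vz v))).
  2: { pose proof (Rabs_pos (vx v)); pose proof (Rabs_pos (vy v)); pose proof (Rabs_pos (vz v)); lra. }
  apply sqrt_le_1_alt. unfold Rsqr, dot.
  pose proof (Rabs_pos (vx v)); pose proof (Rabs_pos (vy v)); pose proof (Rabs_pos (vz v)).
  replace (vx v * vx v) with (Rabs (vx v) * Rabs (vx v)) by (rewrite <- Rabs_mult; apply Rabs_right; nra).
  replace (vy v * vy v) with (Rabs (vy v) * Rabs (vy v)) by (rewrite <- Rabs_mult; apply Rabs_right; nra).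
  replace (vz v * vz v) with (Rabs (vz v) * Rabs (vz v)) by (rewrite <- Rabs_mult; apply Rabs_right; nra).
  nra.
Qed.

Lemma comp_le_vnorm v : Rabs (vx v) <= vnorm v /\ Rabs (vy v) <= vnorm v /\ Rabs (vz v) <= vnorm v.
Proof.
  unfold vnorm, dot.
  assert (0 <= vx v * vx v) by nra; assert (0 <= vy v * vy v) by nra; assert (0 <= vz v * vz v) by nra.
  repeat split; rewrite <- sqrt_Rsqr_abs; apply sqrt_le_1_alt; unfold Rsqr; lra.
Qed.

Definition VRL (f : R -> V3) (L : V3) :=
  RL (fun h => vx (f h)) (vx L) /\ RL (fun h => vy (f h)) (vy L) /\ RL (fun h => vz (f h)) (vz L).

Lemma N1_RL f : VRL f vzero -> RL (fun h => N1 (f h)) 0.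
Proof.
  intros [A [B C]]. unfold N1. replace 0 with (Rabs 0 + Rabs 0 + Rabs 0) by (rewrite Rabs_R0; ring).
  apply RL_plus; [apply RL_plus|];
  (apply (RL_comp_cont _ Rabs); [assumption| apply Rcontinuity_abs]).
Qed.

Lemma VRL_rlim F s L : VRL (fun h => F (s + h)) L -> rlim F s L.
Proof.
  intros [A [B C]] eps He. rewrite RL_def in A, B, C.
  destruct (A (eps/3) ltac:(lra)) as [d1 [Hd1 H1]].
  destruct (B (eps/3) ltac:(lra)) as [d2 [Hd2 H2]].
  destruct (C (eps/3) ltac:(lra)) as [d3 [Hd3 H3]].
  exists (Rmin d1 (Rmin d2 d3)). split. repeat apply Rmin_pos; auto.
  intros t Ht. pose proof (Rmin_l d1 (Rmin d2 d3)); pose proof (Rmin_r d1 (Rmin d2 d3)).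
  pose proof (Rmin_l d2 d3); pose proof (Rmin_r d2 d3).
  eapply Rle_lt_trans. apply vnorm_le_N1. unfold N1.
  specialize (H1 (t - s) ltac:(lra)); specialize (H2 (t - s) ltac:(lra)); specialize (H3 (t - s) ltac:(lra)).
  replace (s + (t - s)) with t in * by ring.
  unfold vsub, vx, vy, vz in *; simpl in *. lra.
Qed.

Lemma rlim_unique F s L1 L2 : rlim F s L1 -> rlim F s L2 -> L1 = L2.
Proof.
  intros H1 H2. 
  assert (K : forall eps, 0 < eps -> N1 (vsub L1 L2) < 2 * (3 * eps)).
  { intros eps He. destruct (H1 eps He) as [d1 [Hd1 A]]. destruct (H2 eps He) as [d2 [Hd2 B]].
    set (t := s + Rmin d1 d2 / 2). pose proof (Rmin_l d1 d2); pose proof (Rmin_r d1 d2).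
    assert (0 < Rmin d1 d2) by (apply Rmin_pos; auto).
    specialize (A t ltac:(unfold t; lra)). specialize (B t ltac:(unfold t; lra)).
    destruct (comp_le_vnorm (vsub (F t) L1)) as [a1 [a2 a3]].
    destruct (comp_le_vnorm (vsub (F t) L2)) as [b1 [b2 b3]].
    unfold N1, vsub, vx, vy, vz in *; simpl in *.
    set (f := F t) in *. destruct f as [[f1 f2] f3], L1 as [[l1 l2] l3], L2 as [[m1 m2] m3]; simpl in *.
    repeat match goal with |- context [Rabs ?x] => idtac end.
    assert (Rabs (l1 - m1) <= Rabs (f1 - l1) + Rabs (f1 - m1)) by
      (replace (l1 - m1) with (-(f1 - l1) + (f1 - m1)) by ring; eapply Rle_trans; [apply Rabs_triang|rewrite Rabs_Ropp; lra]).
    assert (Rabs (l2 - m2) <= Rabs (f2 - l2) + Rabs (f2 - m2)) by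
      (replace (l2 - m2) with (-(f2 - l2) + (f2 - m2)) by ring; eapply Rle_trans; [apply Rabs_triang|rewrite Rabs_Ropp; lra]).
    assert (Rabs (l3 - m3) <= Rabs (f3 - l3) + Rabs (f3 - m3)) by
      (replace (l3 - m3) with (-(f3 - l3) + (f3 - m3)) by ring; eapply Rle_trans; [apply Rabs_triang|rewrite Rabs_Ropp; lra]).
    lra. }
  destruct L1 as [[l1 l2] l3], L2 as [[m1 m2] m3].
  assert (forall x y z, (forall eps, 0 < eps -> Rabs x + Rabs y + Rabs z < 2 * (3 * eps)) -> x = 0 /\ y = 0 /\ z = 0).
  { intros x y z Hk. pose proof (Rabs_pos x); pose proof (Rabs_pos y); pose proof (Rabs_pos z).
    assert (Rabs x + Rabs y + Rabs z = 0).
    { destruct (Req_dec (Rabs x + Rabs y + Rabs z) 0) as [E|E]; auto.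
      specialize (Hk ((Rabs x + Rabs y + Rabs z) / 12) ltac:(lra)). lra. }
    repeat split; match goal with |- ?v = 0 => destruct (Req_dec v 0) as [?|Hx]; [auto| apply Rabs_pos_lt in Hx; lra] end. }
  unfold N1, vsub, vx, vy, vz in K; simpl in K.
  destruct (H _ _ _ K) as [E1 [E2 E3]]. f_equal; [f_equal|]; lra.
Qed.

Lemma llim_unique F s L1 L2 : llim F s L1 -> llim F s L2 -> L1 = L2.
Proof.
  intros H1 H2. apply (rlim_unique (fun t => F (2 * s - t)) s).
  - intros eps He. destruct (H1 eps He) as [d [Hd A]]. exists d; split; auto. intros t Ht. apply A. lra.
  - intros eps He. destruct (H2 eps He) as [d [Hd A]]. exists d; split; auto. intros t Ht. apply A. lra.
Qed.

Lemma cont_llim F s : continuity_pt (fun t => vx (F t)) s -> continuity_pt (fun t => vy (F t)) s ->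
  continuity_pt (fun t => vz (F t)) s -> llim F s (F s).
Proof.
  intros A B C eps He.
  destruct (A (eps/3) ltac:(lra)) as [d1 [Hd1 H1]].
  destruct (B (eps/3) ltac:(lra)) as [d2 [Hd2 H2]].
  destruct (C (eps/3) ltac:(lra)) as [d3 [Hd3 H3]].
  simpl in H1, H2, H3; unfold Rdist in H1, H2, H3.
  exists (Rmin d1 (Rmin d2 d3)). split. repeat apply Rmin_pos; auto.
  intros t Ht. pose proof (Rmin_l d1 (Rmin d2 d3)); pose proof (Rmin_r d1 (Rmin d2 d3)).
  pose proof (Rmin_l d2 d3); pose proof (Rmin_r d2 d3).
  assert (Hd : Rabs (t - s) < Rmin d1 (Rmin d2 d3)) by (rewrite Rabs_left; lra).
  assert (Dt : D_x no_cond s t) by (split; [exact I| lra]).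
  assert (E1 : Rabs (t - s) < d1) by lra. assert (E2 : Rabs (t - s) < d2) by lra. assert (E3 : Rabs (t - s) < d3) by lra.
  specialize (H1 t (conj Dt E1)); specialize (H2 t (conj Dt E2)); specialize (H3 t (conj Dt E3)).
  eapply Rle_lt_trans. apply vnorm_le_N1. unfold N1, vsub, vx, vy, vz in *; simpl in *. lra.
Qed.

Lemma eps_rlim F s L : rlim F s L -> epsilon inhV3 (rlim F s) = L.
Proof. intros H. apply (rlim_unique F s). apply epsilon_spec. exists L; auto. auto. Qed.
Lemma eps_llim F s L : llim F s L -> epsilon inhV3 (llim F s) = L.
Proof. intros H. apply (llim_unique F s). apply epsilon_spec. exists L; auto. auto. Qed.

Lemma VRL_normalize w w0 : VRL w w0 -> w0 <> vzero ->
  VRL (fun h => vscale (/ vnorm (w h)) (w h)) (vscale (/ vnorm w0) w0).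
Proof.
  intros [A [B C]] Hn.
  assert (Hnorm : RL (fun h => vnorm (w h)) (vnorm w0)).
  { unfold vnorm. apply (RL_comp_cont (fun h => dot (w h) (w h)) sqrt).
    - unfold dot. apply RL_plus; [apply RL_plus|]; apply RL_mult; auto.
    - apply continuity_pt_sqrt. left; apply dot_pos; auto. }
  pose proof (vnorm_pos w0 Hn).
  unfold VRL, vscale, vx, vy, vz in *; simpl in *.
  repeat split; apply RL_mult; auto; apply RL_inv; auto; lra.
Qed.


Lemma VRL_ext_loc f g L : (exists d, 0 < d /\ forall h, 0 < h < d -> f h = g h) -> VRL f L -> VRL g L.
Proof.
  intros [d [Hd E]] [A [B C]]. repeat split; (eapply RL_ext_loc; [|eassumption]);
  exists d; split; auto; intros h Hh; rewrite E; auto.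
Qed.

Lemma VRL_eq f L1 L2 : VRL f L1 -> L1 = L2 -> VRL f L2.
Proof. intros H ->; auto. Qed.

Lemma VRL_cross f g A B : VRL f A -> VRL g B -> VRL (fun h => cross (f h) (g h)) (cross A B).
Proof.
  intros [A1 [A2 A3]] [B1 [B2 B3]]. unfold VRL, cross, vx, vy, vz in *; simpl in *.
  repeat split; apply RL_minus; apply RL_mult; auto.
Qed.

Lemma VRL_add f g A B : VRL f A -> VRL g B -> VRL (fun h => vadd (f h) (g h)) (vadd A B).
Proof.
  intros [A1 [A2 A3]] [B1 [B2 B3]]. unfold VRL, vadd, vx, vy, vz in *; simpl in *.
  repeat split; apply RL_plus; auto.
Qed.

Lemma VRL_scale s f a A : RL s a -> VRL f A -> VRL (fun h => vscale (s h) (f h)) (vscale a A).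
Proof.
  intros Hs [A1 [A2 A3]]. unfold VRL, vscale, vx, vy, vz in *; simpl in *.
  repeat split; apply RL_mult; auto.
Qed.

Lemma VRL_const A : VRL (fun _ => A) A.
Proof. repeat split; apply RL_const. Qed.

Lemma RL_dot f g A B : VRL f A -> VRL g B -> RL (fun h => dot (f h) (g h)) (dot A B).
Proof.
  intros [A1 [A2 A3]] [B1 [B2 B3]]. unfold dot.
  apply RL_plus; [apply RL_plus|]; apply RL_mult; auto.
Qed.

Lemma RL_cont_left g s : continuity_pt g s -> RL (fun h => g (s - h)) (g s).
Proof.
  intros H. rewrite RL_def. intros eps He.
  destruct (H eps He) as [d [Hd H']]. exists d; split; auto. intros h Hh.
  simpl in H'; unfold Rdist in H'. apply H'. split.
  - split. exact I. lra.
  - replace (s - h - s) with (- h) by ring. rewrite Rabs_Ropp, Rabs_right; lra.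
Qed.

Lemma VRL_llim F s : VRL (fun h => F (s - h)) (F s) -> llim F s (F s).
Proof.
  intros H. assert (R : rlim (fun t => F (2 * s - t)) s (F s)).
  { apply VRL_rlim. eapply VRL_ext_loc; [|exact H]. exists 1; split; [lra|].
    intros h _. f_equal. ring. }
  intros eps He. destruct (R eps He) as [d [Hd A]]. exists d; split; auto.
  intros t Ht. specialize (A (2 * s - t) ltac:(lra)). replace (2 * s - (2 * s - t)) with t in A by ring. auto.
Qed.

Lemma vnorm_scale s v : 0 <= s -> vnorm (vscale s v) = s * vnorm v.
Proof.
  intros Hs. unfold vnorm.
  replace (dot (vscale s v) (vscale s v)) with ((s * s) * dot v v) by (vd; ring).
  rewrite sqrt_mult_alt. rewrite sqrt_square; auto. nra.
Qed.

Lemma scale_normalize s v : 0 < s -> v <> vzero ->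
  vscale (/ vnorm (vscale s v)) (vscale s v) = vscale (/ vnorm v) v.
Proof.
  intros Hs Hv. rewrite vnorm_scale; [|lra]. pose proof (vnorm_pos v Hv).
  unfold vscale, vx, vy, vz; cbn [fst snd]. f_equal; [f_equal|]; field; split; lra.
Qed.

Lemma abs3 x y z : Rabs (x - y - z) <= Rabs x + Rabs y + Rabs z.
Proof.
  unfold Rminus. eapply Rle_trans. apply Rabs_triang. rewrite Rabs_Ropp.
  pose proof (Rabs_triang x (- y)). rewrite Rabs_Ropp in H. lra.
Qed.

Lemma N1_triang3 a b c : N1 (vsub (vsub a b) c) <= N1 a + N1 b + N1 c.
Proof.
  unfold N1, vsub, vx, vy, vz; cbn [fst snd].
  pose proof (abs3 (fst (fst a)) (fst (fst b)) (fst (fst c))).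
  pose proof (abs3 (snd (fst a)) (snd (fst b)) (snd (fst c))).
  pose proof (abs3 (snd a) (snd b) (snd c)). lra.
Qed.

Lemma N1_scale s v : N1 (vscale s v) = Rabs s * N1 v.
Proof. unfold N1, vscale, vx, vy, vz; simpl. rewrite !Rabs_mult. ring. Qed.

Lemma N1_vsub_sym a b : N1 (vsub a b) = N1 (vsub b a).
Proof.
  unfold N1, vsub, vx, vy, vz; simpl. rewrite (Rabs_minus_sym (fst (fst a))), (Rabs_minus_sym (snd (fst a))),
    (Rabs_minus_sym (snd a)). auto.
Qed.

Lemma cramer e1 e2 e3 v : det3 e1 e2 e3 <> 0 ->
  v = vadd (vadd (vscale (dot v (vscale (/ det3 e1 e2 e3) (cross e2 e3))) e1)
                 (vscale (dot v (vscale (/ det3 e1 e2 e3) (cross e3 e1))) e2))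
                 (vscale (dot v (vscale (/ det3 e1 e2 e3) (cross e1 e2))) e3).
Proof. intros H. vd. f_equal; [f_equal|]; field; auto. Qed.

Lemma cross_comb e1 e2 e3 x1 y1 z1 x2 y2 z2 :
  cross (vadd (vadd (vscale x1 e1) (vscale y1 e2)) (vscale z1 e3))
        (vadd (vadd (vscale x2 e1) (vscale y2 e2)) (vscale z2 e3)) =
  vadd (vadd (vscale (y1 * z2 - z1 * y2) (cross e2 e3)) (vscale (z1 * x2 - x1 * z2) (cross e3 e1)))
       (vscale (x1 * y2 - y1 * x2) (cross e1 e2)).
Proof. vd. f_equal; [f_equal|]; ring. Qed.

Lemma dot_comb e1 e2 e3 x y z a b c :
  dot (vadd (vadd (vscale x e1) (vscale y e2)) (vscale z e3))
      (vadd (vadd (vscale a (cross e2 e3)) (vscale b (cross e3 e1))) (vscale c (cross e1 e2))) =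
  det3 e1 e2 e3 * (x * a + y * b + z * c).
Proof. vd. ring. Qed.


Lemma INR_fact_pos n : 0 < INR (fact n).
Proof. apply lt_0_INR. apply lt_O_fact. Qed.

Lemma qc1_pos m : (1 <= m)%nat -> 0 < qc m 1.
Proof.
  intros H. unfold qc. destruct (Nat.leb_spec 1 m); [|lia].
  apply Rinv_0_lt_compat, INR_fact_pos.
Qed.

Lemma qc_pos a b : (1 <= a)%nat -> (a < b)%nat -> 0 < qc a 1 * qc b 2 - qc b 1 * qc a 2.
Proof.
  intros Ha Hab. unfold qc.
  destruct (Nat.leb_spec 1 a); [|lia]. destruct (Nat.leb_spec 2 b); [|lia].
  destruct (Nat.leb_spec 1 b); [|lia]. destruct (Nat.leb_spec 2 a).
  - destruct a as [|[|p]]; try lia. destruct b as [|[|q]]; try lia.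
    replace (S (S p) - 1)%nat with (S p) by lia. replace (S (S q) - 2)%nat with q by lia.
    replace (S (S q) - 1)%nat with (S q) by lia. replace (S (S p) - 2)%nat with p by lia.
    rewrite !fact_simpl, !mult_INR.
    pose proof (INR_fact_pos p); pose proof (INR_fact_pos q).
    assert (HP : INR (S p) < INR (S q)) by (apply lt_INR; lia).
    assert (0 < INR (S p)) by (apply lt_0_INR; lia).
    assert (E : / (INR (S p) * INR (fact p)) * / INR (fact q) - / (INR (S q) * INR (fact q)) * / INR (fact p)
      = (INR (S q) - INR (S p)) / (INR (S p) * INR (S q) * INR (fact p) * INR (fact q))) by (field; lra).
    rewrite E. apply Rdiv_lt_0_compat. lra. repeat apply Rmult_lt_0_compat; lra.
  - rewrite Rmult_0_r, Rminus_0_r. apply Rmult_lt_0_compat; apply Rinv_0_lt_compat, INR_fact_pos.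
Qed.

Lemma RL_ratio_pow a b : (a < b)%nat -> RL (fun h => h ^ b / h ^ a) 0.
Proof.
  intros H. apply (RL_ext (fun h => h ^ (b - a))).
  - intros h Hh. assert (E : h ^ b = h ^ (b - a) * h ^ a) by (rewrite <- pow_add; f_equal; lia).
    rewrite E. field. apply pow_nonzero; lra.
  - apply RL_pow; lia.
Qed.

Lemma tet1_gen (P Q a gp gm : V3) : dot a gp = 0 -> dot a gm <> 0 ->
  vsub (epsilon inhV3 (fun X => on_line P a X /\ (on_plane P gp X /\ on_plane Q gm X))) P
  = vscale (dot (vsub Q P) gm / dot a gm) a.
Proof.
  intros H1 H2. set (lam := dot (vsub Q P) gm / dot a gm).
  assert (Hs : on_line P a (vadd P (vscale lam a)) /\ (on_plane P gp (vadd P (vscale lam a)) /\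
      on_plane Q gm (vadd P (vscale lam a)))).
  { split; [exists lam; reflexivity|]. unfold on_plane. split.
    - replace (dot (vsub (vadd P (vscale lam a)) P) gp) with (lam * dot a gp) by (vd; ring).
      rewrite H1; ring.
    - replace (dot (vsub (vadd P (vscale lam a)) Q) gm) with (lam * dot a gm - dot (vsub Q P) gm) by (vd; ring).
      unfold lam; field; auto. }
  pose proof (epsilon_spec inhV3 (fun X => on_line P a X /\ (on_plane P gp X /\ on_plane Q gm X)) (ex_intro _ _ Hs)) as Hsp. cbv beta in Hsp. destruct Hsp as [[l E] [_ Hq]].
  set (v := epsilon inhV3 _) in *. unfold on_plane in Hq. rewrite E in Hq |- *.
  replace (dot (vsub (vadd P (vscale l a)) Q) gm) with (l * dot a gm - dot (vsub Q P) gm) in Hq by (vd; ring).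
  assert (l = lam) by (unfold lam; apply (Rmult_eq_reg_r (dot a gm)); auto; field_simplify; auto; lra).
  subst l. vd. f_equal; [f_equal|]; ring.
Qed.

Lemma tet2_gen (P Q a gp gm : V3) : dot a gm = 0 -> dot a gp <> 0 ->
  vsub (epsilon inhV3 (fun X => on_line Q a X /\ (on_plane P gp X /\ on_plane Q gm X))) Q
  = vscale (dot (vsub P Q) gp / dot a gp) a.
Proof.
  intros H1 H2.
  assert (E : (fun X => on_line Q a X /\ (on_plane P gp X /\ on_plane Q gm X)) =
              (fun X => on_line Q a X /\ (on_plane Q gm X /\ on_plane P gp X))).
  { apply functional_extensionality; intros X. apply propositional_extensionality. tauto. }
  rewrite E. apply tet1_gen; auto.
Qed.


Lemma min_ex (P : nat -> Prop) : (exists k, P k) -> exists m, P m /\ forall j, (j < m)%nat -> ~ P j.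
Proof.
  intros [k Hk]. induction k as [k IH] using (well_founded_induction Wf_nat.lt_wf).
  destruct (classic (exists j, (j < k)%nat /\ P j)) as [[j [Hj Pj]]|N].
  - apply (IH j Hj Pj).
  - exists k; split; auto. intros j Hj Pj. apply N; eauto.
Qed.

Lemma dot_vzero n : dot vzero n = 0.
Proof. vd; ring. Qed.

Lemma perp_exists e : e <> vzero -> exists n, n <> vzero /\ dot n e = 0.
Proof.
  intros He. destruct (classic (cross e (1,0,0) = vzero)) as [E1|E1].
  - destruct (classic (cross e (0,1,0) = vzero)) as [E2|E2].
    + exfalso. apply He. destruct e as [[x y] z]. unfold cross, vzero, vx, vy, vz in *; simpl in *.
      injection E1; injection E2; intros. f_equal; [f_equal|]; lra.
    + exists (cross e (0,1,0)); split; auto. vd; ring.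
  - exists (cross e (1,0,0)); split; auto. vd; ring.
Qed.

Lemma par_zero e v n : e <> vzero -> cross e v = vzero -> dot n e = 0 -> dot v n = 0.
Proof.
  intros He Hc Hn. pose proof (dot_pos e He).
  assert (Id : dot e e * dot v n = dot e v * dot n e - dot n (cross e (cross e v))) by (vd; ring).
  rewrite Hc, Hn in Id. assert (Z : dot n (cross e vzero) = 0) by (vd; ring). rewrite Z in Id.
  apply (Rmult_eq_reg_l (dot e e)); [|lra]. rewrite Id. ring.
Qed.

Lemma basis c t0 t1 : t0 < t1 -> dens_ok c t0 t1 ->
  (forall t, t0 < t < t1 -> det3 (Defs.d1 c t) (Defs.d2 c t) (Defs.d3 c t) <> 0) ->
  exists m1 m2 m3, (1 <= m1)%nat /\ (m1 < m2)%nat /\ (m2 < m3)%nat /\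
   (forall j, (j < m1)%nat -> U c t0 j t0 = vzero) /\ U c t0 m1 t0 <> vzero /\
   (forall j, (j < m2)%nat -> cross (U c t0 m1 t0) (U c t0 j t0) = vzero) /\
   cross (U c t0 m1 t0) (U c t0 m2 t0) <> vzero /\
   (forall j, (j < m3)%nat -> det3 (U c t0 m1 t0) (U c t0 m2 t0) (U c t0 j t0) = 0) /\
   det3 (U c t0 m1 t0) (U c t0 m2 t0) (U c t0 m3 t0) <> 0.
Proof.
  intros Ht Hd Htor.
  assert (NF : forall n, n <> vzero -> exists k, dot (U c t0 k t0) n <> 0).
  { intros n Hn. pose proof (no_flat c t0 t1 n Ht Hd Htor Hn) as H.
    apply not_all_ex_not in H. exact H. }
  destruct (min_ex (fun k => U c t0 k t0 <> vzero)) as [m1 [P1 M1]].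
  { destruct (NF (1,0,0) ltac:(intro E; injection E; lra)) as [k Hk]. exists k. intro E.
    rewrite E, dot_vzero in Hk. auto. }
  assert (Z1 : forall j, (j < m1)%nat -> U c t0 j t0 = vzero) by (intros j Hj; apply NNPP, M1; auto).
  assert (H1 : (1 <= m1)%nat).
  { destruct m1; [|lia]. rewrite U0t0 in P1. tauto. }
  set (e1 := U c t0 m1 t0) in *.
  destruct (min_ex (fun k => cross e1 (U c t0 k t0) <> vzero)) as [m2 [P2 M2]].
  { apply NNPP. intro N. destruct (perp_exists e1 P1) as [n [Hn Hne]].
    destruct (NF n Hn) as [k Hk]. apply Hk. apply (par_zero e1); auto.
    apply NNPP. intro Q. apply N. eauto. }
  assert (Z2 : forall j, (j < m2)%nat -> cross e1 (U c t0 j t0) = vzero) by (intros j Hj; apply NNPP, M2; auto).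
  assert (H2 : (m1 < m2)%nat).
  { destruct (Nat.lt_ge_cases m1 m2) as [|G]; auto. exfalso.
    destruct (Nat.eq_dec m1 m2) as [E|E].
    - subst m2. apply P2. fold e1. vd; f_equal; [f_equal|]; ring.
    - rewrite (Z1 m2 ltac:(lia)) in P2. apply P2. vd; f_equal; [f_equal|]; ring. }
  set (e2 := U c t0 m2 t0) in *.
  destruct (min_ex (fun k => det3 e1 e2 (U c t0 k t0) <> 0)) as [m3 [P3 M3]].
  { destruct (NF (cross e1 e2) P2) as [k Hk]. exists k.
    replace (det3 e1 e2 (U c t0 k t0)) with (dot (U c t0 k t0) (cross e1 e2)) by (unfold det3; vd; ring). auto. }
  assert (Z3 : forall j, (j < m3)%nat -> det3 e1 e2 (U c t0 j t0) = 0) by (intros j Hj; apply NNPP, M3; auto).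
  assert (H3 : (m2 < m3)%nat).
  { destruct (Nat.lt_ge_cases m2 m3) as [|G]; auto. exfalso.
    destruct (Nat.eq_dec m2 m3) as [E|E].
    - subst m3. apply P3. fold e2. vd; ring.
    - apply P3. assert (C := Z2 m3 ltac:(lia)).
      replace (det3 e1 e2 (U c t0 m3 t0)) with (- dot e2 (cross e1 (U c t0 m3 t0))) by (unfold det3; vd; ring).
      rewrite C. vd; ring. }
  exists m1, m2, m3. repeat split; auto.
Qed.


Definition sc (F : nat -> R -> R) (t0 : R) (m k : nat) (h : R) := F k (t0 + h) * h ^ k / h ^ m.
Definition comb (e1 e2 e3 : V3) x y z := vadd (vadd (vscale x e1) (vscale y e2)) (vscale z e3).

Lemma cramer' e1 e2 e3 v : det3 e1 e2 e3 <> 0 ->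
  v = comb e1 e2 e3 (dot v (vscale (/ det3 e1 e2 e3) (cross e2 e3)))
        (dot v (vscale (/ det3 e1 e2 e3) (cross e3 e1))) (dot v (vscale (/ det3 e1 e2 e3) (cross e1 e2))).
Proof. apply cramer. Qed.

Lemma cross_comb' e1 e2 e3 x1 y1 z1 x2 y2 z2 :
  cross (comb e1 e2 e3 x1 y1 z1) (comb e1 e2 e3 x2 y2 z2) =
  comb (cross e2 e3) (cross e3 e1) (cross e1 e2) (y1 * z2 - z1 * y2) (z1 * x2 - x1 * z2) (x1 * y2 - y1 * x2).
Proof. apply cross_comb. Qed.

Lemma dot_comb' e1 e2 e3 x y z a b c :
  dot (comb e1 e2 e3 x y z) (comb (cross e2 e3) (cross e3 e1) (cross e1 e2) a b c) =
  det3 e1 e2 e3 * (x * a + y * b + z * c).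
Proof. apply dot_comb. Qed.

Lemma dot_e1_combf e1 e2 e3 a b c :
  dot e1 (comb (cross e2 e3) (cross e3 e1) (cross e1 e2) a b c) = det3 e1 e2 e3 * a.
Proof. unfold comb; vd; ring. Qed.

Lemma dot_comb_f3 e1 e2 e3 x y z : dot (comb e1 e2 e3 x y z) (cross e1 e2) = det3 e1 e2 e3 * z.
Proof. unfold comb; vd; ring. Qed.

Lemma dot_scale_r v s w : dot v (vscale s w) = s * dot v w.
Proof. vd; ring. Qed.
Lemma dot_scale_l v s w : dot (vscale s v) w = s * dot v w.
Proof. vd; ring. Qed.

Lemma VRL_comb e1 e2 e3 x y z a b c : RL x a -> RL y b -> RL z c ->
  VRL (fun h => comb e1 e2 e3 (x h) (y h) (z h)) (comb e1 e2 e3 a b c).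
Proof.
  intros. unfold comb. apply VRL_add; [apply VRL_add|]; apply VRL_scale; auto; apply VRL_const.
Qed.

Lemma comb_00 e1 e2 e3 c : comb e1 e2 e3 0 0 c = vscale c e3.
Proof. unfold comb; vd; f_equal; [f_equal|]; ring. Qed.

Lemma VRL_U c t0 t1 m k : t0 < t1 -> dens_ok c t0 t1 -> (forall j, (j < m)%nat -> U c t0 j t0 = vzero) ->
  VRL (fun h => vscale (h ^ k / h ^ m) (U c t0 k (t0 + h))) (vscale (qc m k) (U c t0 m t0)).
Proof.
  intros Ht Hd Z.
  assert (Zx : forall j, (j < m)%nat -> Ux c t0 j t0 = 0) by (intros j Hj; pose proof (Z j Hj) as E; unfold U in E; injection E; auto).
  assert (Zy : forall j, (j < m)%nat -> Uy c t0 j t0 = 0) by (intros j Hj; pose proof (Z j Hj) as E; unfold U in E; injection E; auto).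
  assert (Zz : forall j, (j < m)%nat -> Uz c t0 j t0 = 0) by (intros j Hj; pose proof (Z j Hj) as E; unfold U in E; injection E; auto).
  unfold VRL, U, vscale, vx, vy, vz; cbn [fst snd]. repeat split.
  - eapply RL_eq. eapply RL_ext; [|apply (scalar_asym (Ux c t0) t0 t1 m k); auto; apply Ux_chain; auto].
    intros; unfold Rdiv; ring. ring.
  - eapply RL_eq. eapply RL_ext; [|apply (scalar_asym (Uy c t0) t0 t1 m k); auto; apply Uy_chain; auto].
    intros; unfold Rdiv; ring. ring.
  - eapply RL_eq. eapply RL_ext; [|apply (scalar_asym (Uz c t0) t0 t1 m k); auto; apply Uz_chain; auto].
    intros; unfold Rdiv; ring. ring.
Qed.

Lemma VRL_U_cont c t0 t1 k s : dens_ok c t0 t1 -> t0 <= s <= t1 ->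
  VRL (fun h => U c t0 k (s + h)) (U c t0 k s) /\ VRL (fun h => U c t0 k (s - h)) (U c t0 k s).
Proof.
  intros Hd Hs. unfold VRL, U, vx, vy, vz; cbn [fst snd]. repeat split;
  first [apply RL_cont | apply RL_cont_left]; eapply chain_cont; eauto;
  first [apply Ux_chain|apply Uy_chain|apply Uz_chain]; auto.
Qed.

Lemma RL_N1 f A : VRL f A -> RL (fun h => N1 (f h)) (N1 A).
Proof.
  intros [A1 [A2 A3]]. unfold N1.
  apply RL_plus; [apply RL_plus|]; (apply (RL_comp_cont _ Rabs); [assumption| apply Rcontinuity_abs]).
Qed.


Lemma vscale_nz s v : s <> 0 -> v <> vzero -> vscale s v <> vzero.
Proof.
  intros Hs Hv E. apply Hv. destruct v as [[x y] z]. unfold vscale, vzero, vx, vy, vz in *; simpl in *.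
  injection E; intros. f_equal; [f_equal|].
  all: apply (Rmult_eq_reg_l s); auto; lra.
Qed.

Lemma scale_comb s f1 f2 f3 a b c : vscale s (comb f1 f2 f3 a b c) = comb f1 f2 f3 (s * a) (s * b) (s * c).
Proof. unfold comb; vd; f_equal; [f_equal|]; ring. Qed.

Lemma tri_cyc v a b : dot v (cross a b) = dot a (cross b v).
Proof. vd; ring. Qed.
Lemma tri_det v a b : dot v (cross a b) = det3 a b v.
Proof. vd; ring. Qed.
Lemma dot_vzero_r a : dot a vzero = 0.
Proof. vd; ring. Qed.
Lemma det_cyc2 e1 e2 e3 : dot e2 (cross e3 e1) = det3 e1 e2 e3.
Proof. vd; ring. Qed.
Lemma det_cyc3 e1 e2 e3 : dot e3 (cross e1 e2) = det3 e1 e2 e3.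
Proof. vd; ring. Qed.

Lemma dot_self_cross a b : dot a (cross a b) = 0.
Proof. vd; ring. Qed.
Lemma vsub_decomp v1 v2 r0 rt : vsub v1 v2 = vsub (vsub (vsub v1 r0) (vsub rt r0)) (vsub v2 rt).
Proof. vd; f_equal; [f_equal|]; ring. Qed.
Lemma dot_vsub_swap a b w : dot (vsub a b) w = - dot (vsub b a) w.
Proof. vd; ring. Qed.

Lemma hpow_pos h n : 0 < h -> 0 < h ^ n.
Proof. intros; apply pow_lt; auto. Qed.

Lemma main_local c t0 t1 : t0 < t1 -> dens_ok c t0 t1 ->
  (forall t, t0 < t <= t1 -> Defs.d1 c t <> vzero /\ cross (Defs.d1 c t) (Defs.d2 c t) <> vzero) ->
  (forall t, t0 < t < t1 -> det3 (Defs.d1 c t) (Defs.d2 c t) (Defs.d3 c t) <> 0) ->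
  forall eps, 0 < eps -> exists delta, 0 < delta /\
    forall t, t0 < t < t0 + delta -> t <= t1 ->
      vdist (tet_v0 c t0 t) (tet_v1 c t0 t) < eps /\
      vdist (tet_v1 c t0 t) (tet_v2 c t0 t) < eps /\
      vdist (tet_v2 c t0 t) (tet_v3 c t0 t) < eps.
Proof.
  intros Ht Hd Hreg Htor eps Heps.
  destruct (basis c t0 t1 Ht Hd Htor) as (m1 & m2 & m3 & Hm1 & H12 & H23 & Z1 & P1 & Z2 & P2 & Z3 & P3).
  set (e1 := U c t0 m1 t0) in *. set (e2 := U c t0 m2 t0) in *. set (e3 := U c t0 m3 t0) in *.
  set (D := det3 e1 e2 e3) in *.
  set (g1 := vscale (/ D) (cross e2 e3)). set (g2 := vscale (/ D) (cross e3 e1)).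
  set (g3 := vscale (/ D) (cross e1 e2)).
  set (X := Gn c t0 g1). set (Y := Gn c t0 g2). set (Z := Gn c t0 g3).
  assert (CX : chain X t0 t1) by (apply Gn_chain; auto).
  assert (CY : chain Y t0 t1) by (apply Gn_chain; auto).
  assert (CZ : chain Z t0 t1) by (apply Gn_chain; auto).
  assert (VX : forall j, (j < m1)%nat -> X j t0 = 0).
  { intros j Hj. unfold X, Gn. rewrite Z1; auto. apply dot_vzero. }
  assert (OX : X m1 t0 = 1).
  { unfold X, Gn. fold e1. unfold g1. rewrite dot_scale_r. change (dot e1 (cross e2 e3)) with D. field; auto. }
  assert (VY : forall j, (j < m2)%nat -> Y j t0 = 0).
  { intros j Hj. unfold Y, Gn, g2. rewrite dot_scale_r.
    rewrite tri_cyc. rewrite Z2; auto. rewrite dot_vzero_r. ring. }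
  assert (OY : Y m2 t0 = 1).
  { unfold Y, Gn. fold e2. unfold g2. rewrite dot_scale_r.
    rewrite det_cyc2. fold D. field; auto. }
  assert (VZ : forall j, (j < m3)%nat -> Z j t0 = 0).
  { intros j Hj. unfold Z, Gn, g3. rewrite dot_scale_r.
    rewrite tri_det. rewrite Z3; auto. ring. }
  assert (OZ : Z m3 t0 = 1).
  { unfold Z, Gn. fold e3. unfold g3. rewrite dot_scale_r.
    rewrite det_cyc3. fold D. field; auto. }
  assert (LX : forall k, RL (sc X t0 m1 k) (qc m1 k)).
  { intros k. eapply RL_eq. apply (scalar_asym X t0 t1); auto. rewrite OX; ring. }
  assert (LY : forall k, RL (sc Y t0 m2 k) (qc m2 k)).
  { intros k. eapply RL_eq. apply (scalar_asym Y t0 t1); auto. rewrite OY; ring. }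
  assert (LZ : forall k, RL (sc Z t0 m3 k) (qc m3 k)).
  { intros k. eapply RL_eq. apply (scalar_asym Z t0 t1); auto. rewrite OZ; ring. }
  set (m1s := fun h => sc Y t0 m2 1 h * sc Z t0 m3 2 h - sc Z t0 m3 1 h * sc Y t0 m2 2 h).
  set (m2s := fun h => sc Z t0 m3 1 h * sc X t0 m1 2 h - sc X t0 m1 1 h * sc Z t0 m3 2 h).
  set (m3s := fun h => sc X t0 m1 1 h * sc Y t0 m2 2 h - sc Y t0 m2 1 h * sc X t0 m1 2 h).
  set (L1 := qc m2 1 * qc m3 2 - qc m3 1 * qc m2 2).
  set (L2 := qc m3 1 * qc m1 2 - qc m1 1 * qc m3 2).
  set (L3 := qc m1 1 * qc m2 2 - qc m2 1 * qc m1 2).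
  assert (RL1 : RL m1s L1) by (apply RL_minus; apply RL_mult; auto).
  assert (RL2 : RL m2s L2) by (apply RL_minus; apply RL_mult; auto).
  assert (RL3 : RL m3s L3) by (apply RL_minus; apply RL_mult; auto).
  assert (PL1 : 0 < L1) by (apply qc_pos; lia).
  assert (PL3 : 0 < L3) by (apply qc_pos; lia).
  set (f1 := cross e2 e3). set (f2 := cross e3 e1). set (f3 := cross e1 e2) in *.
  assert (Hcr : forall t, Defs.d1 c t = comb e1 e2 e3 (X 1%nat t) (Y 1%nat t) (Z 1%nat t)).
  { intros t. exact (cramer' e1 e2 e3 (Defs.d1 c t) P3). }
  assert (Hcr2 : forall t, Defs.d2 c t = comb e1 e2 e3 (X 2%nat t) (Y 2%nat t) (Z 2%nat t)).
  { intros t. exact (cramer' e1 e2 e3 (Defs.d2 c t) P3). }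
  assert (Hcr0 : forall t, vsub (pt c t) (pt c t0) = comb e1 e2 e3 (X 0%nat t) (Y 0%nat t) (Z 0%nat t)).
  { intros t. exact (cramer' e1 e2 e3 (vsub (pt c t) (pt c t0)) P3). }
  assert (HC : forall t, cross (Defs.d1 c t) (Defs.d2 c t) =
     comb f1 f2 f3 (Y 1%nat t * Z 2%nat t - Z 1%nat t * Y 2%nat t) (Z 1%nat t * X 2%nat t - X 1%nat t * Z 2%nat t)
        (X 1%nat t * Y 2%nat t - Y 1%nat t * X 2%nat t)).
  { intros t. rewrite Hcr, Hcr2. apply cross_comb'. }
  set (ap := vscale (/ vnorm e1) e1).
  assert (Hap : alpha_p c t0 = ap).
  { unfold alpha_p. apply eps_rlim. apply VRL_rlim.
    pose proof (VRL_U c t0 t1 m1 1 Ht Hd Z1) as W. fold e1 in W.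
    assert (Q1 := qc1_pos m1 Hm1).
    pose proof (VRL_normalize _ _ W (vscale_nz _ _ (Rgt_not_eq _ _ Q1) P1)) as W2.
    rewrite scale_normalize in W2; auto.
    eapply VRL_ext_loc; [|exact W2]. exists (t1 - t0). split. lra. intros h Hh.
    unfold alpha. rewrite U1. apply scale_normalize.
    apply Rdiv_lt_0_compat; apply hpow_pos; lra. apply Hreg; lra. }
  set (gp := vscale (/ vnorm f3) f3).
  assert (Hgp : gamma_p c t0 = gp).
  { unfold gamma_p. apply eps_rlim. apply VRL_rlim.
    set (w := fun h => comb f1 f2 f3 (m1s h * (h ^ m3 / h ^ m1)) (m2s h * (h ^ m3 / h ^ m2)) (m3s h)).
    assert (W : VRL w (vscale L3 f3)).
    { rewrite <- (comb_00 f1 f2 f3 L3). apply VRL_comb; auto.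
      - eapply RL_eq. apply RL_mult. apply RL1. apply RL_ratio_pow; lia. ring.
      - eapply RL_eq. apply RL_mult. apply RL2. apply RL_ratio_pow; lia. ring. }
    pose proof (VRL_normalize _ _ W (vscale_nz _ _ (Rgt_not_eq _ _ PL3) P2)) as W2.
    rewrite scale_normalize in W2; auto.
    eapply VRL_ext_loc; [|exact W2]. exists (t1 - t0). split. lra. intros h Hh.
    assert (Hs : 0 < h ^ 3 / h ^ (m1 + m2)) by (apply Rdiv_lt_0_compat; apply hpow_pos; lra).
    assert (Ew : w h = vscale (h ^ 3 / h ^ (m1 + m2)) (cross (Defs.d1 c (t0 + h)) (Defs.d2 c (t0 + h)))).
    { rewrite HC, scale_comb. unfold w, m1s, m2s, m3s, sc. rewrite pow_add.
      assert (h ^ m1 <> 0) by (apply pow_nonzero; lra).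
      assert (h ^ m2 <> 0) by (apply pow_nonzero; lra).
      assert (h ^ m3 <> 0) by (apply pow_nonzero; lra).
      f_equal; simpl; field; repeat split; auto; lra. }
    rewrite Ew. unfold gamma. apply scale_normalize; auto. apply Hreg; lra. }
  assert (Ham : forall t, t0 < t <= t1 -> alpha_m c t = alpha c t).
  { intros t Ht'. unfold alpha_m. apply eps_llim. apply VRL_llim.
    destruct (VRL_U_cont c t0 t1 1 t Hd ltac:(lra)) as [_ W].
    exact (VRL_normalize _ _ W (proj1 (Hreg t Ht'))). }
  assert (Hgm : forall t, t0 < t <= t1 -> gamma_m c t = gamma c t).
  { intros t Ht'. unfold gamma_m. apply eps_llim. apply VRL_llim.
    destruct (VRL_U_cont c t0 t1 1 t Hd ltac:(lra)) as [_ W1].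
    destruct (VRL_U_cont c t0 t1 2 t Hd ltac:(lra)) as [_ W2].
    exact (VRL_normalize _ _ (VRL_cross _ _ _ _ W1 W2) (proj2 (Hreg t Ht'))). }
  assert (QZ := qc1_pos m3 ltac:(lia)).
  destruct (RL_ev_pos _ _ RL1 PL1) as [dA [HdA EA]].
  destruct (RL_ev_pos _ _ (LZ 1%nat) QZ) as [dB [HdB EB]].
  set (lamf := fun h => vnorm e1 * h ^ m1 * (sc X t0 m1 0 h + sc Y t0 m2 0 h * m2s h / m1s h
                                                 + sc Z t0 m3 0 h * m3s h / m1s h)).
  set (B1 := fun h => Rabs (lamf h) * N1 ap).
  set (B3 := fun h => Rabs (h * sc Z t0 m3 0 h / sc Z t0 m3 1 h) * N1 (Defs.d1 c (t0 + h))).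
  set (B0 := fun h => N1 (U c t0 0 (t0 + h))).
  assert (RB1 : RL B1 0).
  { unfold B1. eapply RL_eq. apply RL_mult; [| apply RL_const].
    apply (RL_comp_cont lamf Rabs (vnorm e1 * 0 * (qc m1 0 + qc m2 0 * L2 / L1 + qc m3 0 * L3 / L1))).
    - unfold lamf. apply RL_mult. apply RL_mult. apply RL_const. apply RL_pow; lia.
      apply RL_plus; [apply RL_plus|]; [apply LX| |];
        (apply RL_div; [apply RL_mult; auto| auto | apply Rgt_not_eq; auto]).
    - apply Rcontinuity_abs.
    - rewrite Rmult_0_r, Rmult_0_l, Rabs_R0; ring. }
  assert (RB3 : RL B3 0).
  { unfold B3. eapply RL_eq. apply RL_mult.
    apply (RL_comp_cont _ Rabs (0 * qc m3 0 / qc m3 1)).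
    - apply RL_div; auto. apply RL_mult; auto. apply RL_id. apply Rgt_not_eq; auto.
    - apply Rcontinuity_abs.
    - apply RL_N1. exact (proj1 (VRL_U_cont c t0 t1 1 t0 Hd ltac:(lra))).
    - unfold Rdiv. rewrite !Rmult_0_l, Rabs_R0; ring. }
  assert (RB0 : RL B0 0).
  { unfold B0. eapply RL_eq. apply RL_N1. exact (proj1 (VRL_U_cont c t0 t1 0 t0 Hd ltac:(lra))).
    rewrite U0t0. unfold N1, vzero, vx, vy, vz; simpl. rewrite Rabs_R0; ring. }
  assert (KEY : forall h, 0 < h < Rmin (t1 - t0) (Rmin dA dB) ->
     vdist (tet_v0 c t0 (t0 + h)) (tet_v1 c t0 (t0 + h)) <= B1 h /\
     vdist (tet_v1 c t0 (t0 + h)) (tet_v2 c t0 (t0 + h)) <= B1 h + B0 h + B3 h /\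
     vdist (tet_v2 c t0 (t0 + h)) (tet_v3 c t0 (t0 + h)) <= B3 h).
  { intros h Hh. pose proof (Rmin_l (t1 - t0) (Rmin dA dB)); pose proof (Rmin_r (t1 - t0) (Rmin dA dB)).
    pose proof (Rmin_l dA dB); pose proof (Rmin_r dA dB).
    set (tt := t0 + h). assert (Htt : t0 < tt <= t1) by (unfold tt; lra).
    destruct (Hreg tt Htt) as [Hr1 Hr2].
    assert (HP : h ^ m1 <> 0) by (apply pow_nonzero; lra).
    assert (HQ : h ^ m2 <> 0) by (apply pow_nonzero; lra).
    assert (HR : h ^ m3 <> 0) by (apply pow_nonzero; lra).
    set (M1 := Y 1%nat tt * Z 2%nat tt - Z 1%nat tt * Y 2%nat tt) in *.
    set (M2 := Z 1%nat tt * X 2%nat tt - X 1%nat tt * Z 2%nat tt) in *.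
    set (M3 := X 1%nat tt * Y 2%nat tt - Y 1%nat tt * X 2%nat tt) in *.
    assert (Em1 : m1s h = M1 * (h * (h * h)) / (h ^ m2 * h ^ m3)) by (unfold m1s, M1, sc; fold tt; simpl; field; auto).
    assert (Em2 : m2s h = M2 * (h * (h * h)) / (h ^ m1 * h ^ m3)) by (unfold m2s, M2, sc; fold tt; simpl; field; auto).
    assert (Em3 : m3s h = M3 * (h * (h * h)) / (h ^ m1 * h ^ m2)) by (unfold m3s, M3, sc; fold tt; simpl; field; auto).
    assert (HM1 : M1 <> 0).
    { intro E. pose proof (EA h ltac:(lra)). rewrite Em1, E in H3. unfold Rdiv in H3. lra. }
    assert (HZ1 : Z 1%nat tt <> 0).
    { intro E. pose proof (EB h ltac:(lra)). unfold sc in H3. fold tt in H3. rewrite E in H3. unfold Rdiv in H3. lra. }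
    assert (He1 := vnorm_pos e1 P1). assert (Hf3 := vnorm_pos f3 P2).
    assert (HnC := vnorm_pos _ Hr2). assert (Hnr := vnorm_pos _ Hr1).
    pose proof HnC as HnC'. rewrite HC in HnC'. fold M1 M2 M3 in HnC'. unfold f1, f2, f3 in HnC'.
    pose proof Hnr as Hnr'. rewrite Hcr in Hnr'.
    assert (T1 : vsub (tet_v1 c t0 tt) (pt c t0) =
       vscale (dot (vsub (pt c tt) (pt c t0)) (gamma c tt) / dot ap (gamma c tt)) ap).
    { unfold tet_v1, in_L. rewrite Hap, Hgp, Hgm; auto. apply tet1_gen.
      - unfold ap, gp. rewrite dot_scale_l, dot_scale_r. unfold f3. rewrite dot_self_cross. ring.
      - unfold ap, gamma. rewrite dot_scale_l, dot_scale_r, HC. unfold f1, f2, f3. rewrite dot_e1_combf. fold D.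
        fold M1 M2 M3. repeat apply Rmult_integral_contrapositive_currified;
        try (apply Rinv_neq_0_compat); try (apply Rgt_not_eq; lra); auto.
}
    assert (Lam : dot (vsub (pt c tt) (pt c t0)) (gamma c tt) / dot ap (gamma c tt) = lamf h).
    { unfold ap, gamma. rewrite !dot_scale_l, !dot_scale_r, Hcr0, HC. unfold f1, f2, f3. rewrite dot_comb', dot_e1_combf. fold D.
      fold M1 M2 M3. unfold lamf. rewrite Em1, Em2, Em3. unfold sc. fold tt. simpl.
      field. repeat split; auto; lra. }
    rewrite Lam in T1.
    assert (T2 : vsub (tet_v2 c t0 tt) (pt c tt) =
       vscale (dot (vsub (pt c t0) (pt c tt)) gp / dot (alpha c tt) gp) (alpha c tt)).
    { unfold tet_v2, in_L. rewrite Ham, Hgp, Hgm; auto. apply tet2_gen.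
      - unfold alpha, gamma. rewrite dot_scale_l, dot_scale_r, dot_self_cross. ring.
      - unfold alpha, gp. rewrite dot_scale_l, dot_scale_r, Hcr. unfold f3. rewrite dot_comb_f3. fold D.
        fold M1 M2 M3. repeat apply Rmult_integral_contrapositive_currified;
        try (apply Rinv_neq_0_compat); try (apply Rgt_not_eq; lra); auto.
        fold f3. apply Rgt_not_eq; lra. }
    assert (N2 : N1 (vsub (tet_v2 c t0 tt) (pt c tt)) = B3 h).
    { rewrite T2. unfold alpha. rewrite !N1_scale, <- Rmult_assoc, <- Rabs_mult. unfold B3. fold tt.
      f_equal. rewrite <- Rabs_Ropp. f_equal.
      unfold gp. rewrite dot_vsub_swap, !dot_scale_l, !dot_scale_r, Hcr0, Hcr. unfold f3.
      rewrite !dot_comb_f3. fold D. unfold sc. fold tt. simpl. field.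
      repeat split; fold f3; try (apply Rgt_not_eq; lra); auto. }
    unfold vdist, tet_v0, tet_v3. repeat split.
    - eapply Rle_trans. apply vnorm_le_N1. rewrite N1_vsub_sym, T1, N1_scale. unfold B1. lra.
    - eapply Rle_trans. apply vnorm_le_N1. rewrite (vsub_decomp _ _ (pt c t0) (pt c tt)).
      eapply Rle_trans. apply N1_triang3. rewrite T1, N1_scale, N2. unfold B1, B0. rewrite U0. fold tt. lra.
    - eapply Rle_trans. apply vnorm_le_N1. rewrite N2. lra. }
  rewrite RL_def in RB1, RB3, RB0.
  destruct (RB1 (eps/3) ltac:(lra)) as [q1 [Hq1 K1]].
  destruct (RB0 (eps/3) ltac:(lra)) as [q0 [Hq0 K0]].
  destruct (RB3 (eps/3) ltac:(lra)) as [q3 [Hq3 K3]].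
  set (dm := Rmin (t1 - t0) (Rmin dA dB)).
  assert (Hdm : 0 < dm) by (unfold dm; repeat apply Rmin_pos; lra).
  exists (Rmin dm (Rmin q1 (Rmin q0 q3))). split. repeat apply Rmin_pos; lra.
  intros t Ht1 Ht2.
  pose proof (Rmin_l dm (Rmin q1 (Rmin q0 q3))); pose proof (Rmin_r dm (Rmin q1 (Rmin q0 q3))).
  pose proof (Rmin_l q1 (Rmin q0 q3)); pose proof (Rmin_r q1 (Rmin q0 q3)).
  pose proof (Rmin_l q0 q3); pose proof (Rmin_r q0 q3).
  set (h := t - t0). replace t with (t0 + h) by (unfold h; ring).
  assert (Hh : 0 < h < dm) by (unfold h; lra).
  destruct (KEY h Hh) as [A1 [A2 A3]].
  specialize (K1 h ltac:(unfold h; lra)). specialize (K0 h ltac:(unfold h; lra)). specialize (K3 h ltac:(unfold h; lra)).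
  rewrite Rminus_0_r in K1, K0, K3. apply Rabs_def2 in K1. apply Rabs_def2 in K0. apply Rabs_def2 in K3.
  repeat split; lra.
Qed.



Theorem lemma6 (I : R -> Prop) (c : rcurve) (t0 t1 : R) :
  is_interval I -> I t0 -> I t1 ->
  denoms_nonzero c I -> proper_param c I -> ~ contained_in_plane c I ->
  admissible c I t0 t1 ->
  forall eps, 0 < eps -> exists delta, 0 < delta /\
    forall t, t0 < t < t0 + delta -> t <= t1 ->
      vdist (tet_v0 c t0 t) (tet_v1 c t0 t) < eps /\
      vdist (tet_v1 c t0 t) (tet_v2 c t0 t) < eps /\
      vdist (tet_v2 c t0 t) (tet_v3 c t0 t) < eps.
Proof.
  intros HI H0 H1 Hden Hprop Hplane Hadm.
  destruct Hadm as [Hlt [Hnc _]].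
  apply main_local; auto.
  - intros t Ht. apply Hden. apply (HI t0 t t1); auto.
  - intros t Ht. specialize (Hnc t Ht). split.
    + intro E. apply Hnc. left. right. exact E.
    + intro E. apply Hnc. right. left. unfold inflection, curvature. rewrite E.
      unfold vnorm, dot, vzero, vx, vy, vz; simpl.
      replace (0 * 0 + 0 * 0 + 0 * 0) with 0 by ring. rewrite sqrt_0. unfold Rdiv; ring.
  - intros t Ht E. apply (Hnc t ltac:(lra)). right; right. exact E.
Qed.
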